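(* For any $n\ge2$, there exists a $\Sigma^0_n$ equivalence relation on $2^\mathbb{N}$ which is not $\Pi^0_n$-graphable. Also, for any $n\ge1$, there exists a $\Sigma^0_n$ equivalence relation on $\mathbb{N}$ which is not $\Pi^0_n$-graphable.
   Context: $E$ is $\Gamma$-graphable if there is a simple undirected graph $G$ in $\Gamma$ whose connectedness relation (connected by a finite path) equals $E$. Pointclasses are lightface. *)

(* Defs.v *)
(* Lightface arithmetical hierarchy via formulas of
   (second-order) arithmetic with number variables and real (set) variables. *)
From Stdlib Require Import Relations Relation_Operators.

(* Arithmetic terms; number variables are de Bruijn indices. *)
Inductive term : Type :=
| tvar : nat -> term
| tzero : term
| tsucc : term -> term
| tplus : term -> term -> term
| tmult : term -> term -> term.

(* Formulas.  [fmem i t] means "t belongs to the real X_i" (X_i : nat -> bool).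
   Quantifiers bind number variable 0.  [fbex t p] is (exists x < t, p),
   [fball t p] is (forall x < t, p), with t evaluated outside the binder. *)
Inductive formula : Type :=
| feq : term -> term -> formula
| flt : term -> term -> formula
| fmem : nat -> term -> formula
| fnot : formula -> formula
| fand : formula -> formula -> formula
| forr : formula -> formula -> formula
| fbex : term -> formula -> formula
| fball : term -> formula -> formula
| fex : formula -> formula
| fall : formula -> formula.

Definition scons {A : Type} (a : A) (rho : nat -> A) : nat -> A :=
  fun i => match i with 0 => a | S j => rho j end.

Fixpoint teval (rho : nat -> nat) (t : term) : nat :=
  match t with
  | tvar i => rho i
  | tzero => 0
  | tsucc u => S (teval rho u)
  | tplus u v => teval rho u + teval rho v
  | tmult u v => teval rho u * teval rho v
  end.

Fixpoint sat (xi : nat -> nat -> bool) (rho : nat -> nat) (p : formula) : Prop :=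
  match p with
  | feq u v => teval rho u = teval rho v
  | flt u v => teval rho u < teval rho v
  | fmem i u => xi i (teval rho u) = true
  | fnot q => ~ sat xi rho q
  | fand q r => sat xi rho q /\ sat xi rho r
  | forr q r => sat xi rho q \/ sat xi rho r
  | fbex u q => exists a, a < teval rho u /\ sat xi (scons a rho) q
  | fball u q => forall a, a < teval rho u -> sat xi (scons a rho) q
  | fex q => exists a, sat xi (scons a rho) q
  | fall q => forall a, sat xi (scons a rho) q
  end.

Fixpoint bounded (p : formula) : Prop :=
  match p with
  | feq _ _ | flt _ _ | fmem _ _ => True
  | fnot q => bounded q
  | fand q r | forr q r => bounded q /\ bounded r
  | fbex _ q | fball _ q => bounded q
  | fex _ | fall _ => False
  end.

Fixpoint is_Sigma (n : nat) (p : formula) : Prop :=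
  match n with
  | 0 => bounded p
  | S m => match p with fex q => is_Pi m q | _ => False end
  end
with is_Pi (n : nat) (p : formula) : Prop :=
  match n with
  | 0 => bounded p
  | S m => match p with fall q => is_Sigma m q | _ => False end
  end.

Definition no_reals : nat -> nat -> bool := fun _ _ => false.
Definition no_nums : nat -> nat := fun _ => 0.

Definition nat_rel_def (cls : formula -> Prop) (R : nat -> nat -> Prop) : Prop :=
  exists p, cls p /\
    forall a b, R a b <-> sat no_reals (scons a (scons b no_nums)) p.

(* Binary relations on Cantor space 2^N = nat -> bool defined by a formula
   with free real variables X_0, X_1 (lightface: no other parameters). *)
Definition cantor_rel_def (cls : formula -> Prop)
  (R : (nat -> bool) -> (nat -> bool) -> Prop) : Prop :=
  exists p, cls p /\
    forall x y, R x y <-> sat (scons x (scons y no_reals)) no_nums p.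

Definition Sigma0_nat (n : nat) := nat_rel_def (is_Sigma n).
Definition Pi0_nat (n : nat) := nat_rel_def (is_Pi n).
Definition Sigma0_cantor (n : nat) := cantor_rel_def (is_Sigma n).
Definition Pi0_cantor (n : nat) := cantor_rel_def (is_Pi n).

Definition graphable {X : Type} (Gamma : (X -> X -> Prop) -> Prop)
  (E : X -> X -> Prop) : Prop :=
  exists G : X -> X -> Prop, Gamma G /\
    (forall x y, G x y -> G y x) /\ (forall x, ~ G x x) /\
    (forall x y, E x y <-> clos_refl_trans X G x y).

(* Main.v *)
Require Import Defs.
From Stdlib Require Import Relations.
From Stdlib Require Import Relation_Operators Arith Lia List Setoid Morphisms Classical Bool FunctionalExtensionality Factorial.
Import ListNotations.

Lemma teval_ext : forall t rho rho', (forall i, rho i = rho' i) -> teval rho t = teval rho' t.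
Proof. induction t; intros; simpl; auto. Qed.

Lemma sat_ext : forall p xi rho rho', (forall i, rho i = rho' i) ->
  (sat xi rho p <-> sat xi rho' p).
Proof.
  induction p; intros xi rho rho' H; simpl;
  try (rewrite (teval_ext t rho rho' H));
  try (rewrite (teval_ext t0 rho rho' H)); try tauto.
  - rewrite (IHp xi rho rho' H); tauto.
  - rewrite (IHp1 xi rho rho' H), (IHp2 xi rho rho' H); tauto.
  - rewrite (IHp1 xi rho rho' H), (IHp2 xi rho rho' H); tauto.
  - split; intros [a [Ha Hs]]; exists a; split; auto;
    [rewrite <- (IHp xi (scons a rho)) | rewrite (IHp xi (scons a rho) (scons a rho'))]; auto;
    intros [|i]; simpl; auto.
  - split; intros Hs a Ha; specialize (Hs a Ha);
    [rewrite <- (IHp xi (scons a rho)) | rewrite (IHp xi (scons a rho) (scons a rho'))]; auto;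
    intros [|i]; simpl; auto.
  - split; intros [a Hs]; exists a;
    [rewrite <- (IHp xi (scons a rho)) | rewrite (IHp xi (scons a rho) (scons a rho'))]; auto;
    intros [|i]; simpl; auto.
  - split; intros Hs a; specialize (Hs a);
    [rewrite <- (IHp xi (scons a rho)) | rewrite (IHp xi (scons a rho) (scons a rho'))]; auto;
    intros [|i]; simpl; auto.
Qed.

Fixpoint tsubst (s : nat -> term) (t : term) : term :=
  match t with
  | tvar i => s i
  | tzero => tzero
  | tsucc u => tsucc (tsubst s u)
  | tplus u v => tplus (tsubst s u) (tsubst s v)
  | tmult u v => tmult (tsubst s u) (tsubst s v)
  end.

Definition tlift (t : term) : term := tsubst (fun k => tvar (S k)) t.

Definition up (s : nat -> term) : nat -> term :=
  fun i => match i with 0 => tvar 0 | S j => tlift (s j) end.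

Fixpoint fsubst (s : nat -> term) (p : formula) : formula :=
  match p with
  | feq u v => feq (tsubst s u) (tsubst s v)
  | flt u v => flt (tsubst s u) (tsubst s v)
  | fmem i u => fmem i (tsubst s u)
  | fnot q => fnot (fsubst s q)
  | fand q r => fand (fsubst s q) (fsubst s r)
  | forr q r => forr (fsubst s q) (fsubst s r)
  | fbex u q => fbex (tsubst s u) (fsubst (up s) q)
  | fball u q => fball (tsubst s u) (fsubst (up s) q)
  | fex q => fex (fsubst (up s) q)
  | fall q => fall (fsubst (up s) q)
  end.

Lemma teval_subst : forall t s rho, teval rho (tsubst s t) = teval (fun i => teval rho (s i)) t.
Proof. induction t; intros; simpl; auto. Qed.

Lemma teval_lift : forall t a rho, teval (scons a rho) (tlift t) = teval rho t.
Proof. intros. unfold tlift. rewrite teval_subst. apply teval_ext. intros; reflexivity. Qed.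

Lemma up_env : forall s a rho i,
  teval (scons a rho) (up s i) = scons a (fun j => teval rho (s j)) i.
Proof. intros s a rho [|i]; simpl; auto. apply teval_lift. Qed.

Lemma sat_subst : forall p xi s rho,
  sat xi rho (fsubst s p) <-> sat xi (fun i => teval rho (s i)) p.
Proof.
  induction p; intros xi s rho; simpl; rewrite ?teval_subst; try tauto.
  - rewrite IHp; tauto.
  - rewrite IHp1, IHp2; tauto.
  - rewrite IHp1, IHp2; tauto.
  - split; intros [a [Ha Hs]]; exists a; split; auto;
    [rewrite IHp in Hs | rewrite IHp]; (eapply sat_ext; [|eassumption]);
    intros i; rewrite ?up_env; auto; symmetry; rewrite ?up_env; auto.
  - split; intros Hs a Ha; specialize (Hs a Ha);
    [rewrite IHp in Hs | rewrite IHp]; (eapply sat_ext; [|eassumption]);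
    intros i; rewrite ?up_env; auto; symmetry; rewrite ?up_env; auto.
  - split; intros [a Hs]; exists a;
    [rewrite IHp in Hs | rewrite IHp]; (eapply sat_ext; [|eassumption]);
    intros i; rewrite ?up_env; auto; symmetry; rewrite ?up_env; auto.
  - split; intros Hs a; specialize (Hs a);
    [rewrite IHp in Hs | rewrite IHp]; (eapply sat_ext; [|eassumption]);
    intros i; rewrite ?up_env; auto; symmetry; rewrite ?up_env; auto.
Qed.

Lemma bounded_subst : forall p s, bounded p -> bounded (fsubst s p).
Proof. induction p; intros; simpl in *; intuition. Qed.

Lemma SP_subst : forall n, (forall p s, is_Sigma n p -> is_Sigma n (fsubst s p)) /\
                          (forall p s, is_Pi n p -> is_Pi n (fsubst s p)).
Proof.
  induction n; split; intros p s H; simpl in *.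
  - apply bounded_subst; auto.
  - apply bounded_subst; auto.
  - destruct p; try contradiction; simpl. apply IHn; auto.
  - destruct p; try contradiction; simpl. apply IHn; auto.
Qed.

Definition inst (ts : list term) (p : formula) : formula :=
  fsubst (fun i => nth i ts tzero) p.

Lemma sat_inst : forall xi rho ts p,
  sat xi rho (inst ts p) <-> sat xi (fun i => nth i (map (teval rho) ts) 0) p.
Proof.
  intros. unfold inst. rewrite sat_subst. apply sat_ext. intros i.
  revert ts; induction i; intros [|t ts]; simpl; auto.
Qed.

Definition P (x y : nat) : nat := (x + y) * S (x + y) + (y + y).

Lemma P_inj : forall x y x' y', P x y = P x' y' -> x = x' /\ y = y'.
Proof.
  unfold P; intros x y x' y' H.
  assert (x + y = x' + y').
  { destruct (lt_eq_lt_dec (x+y) (x'+y')) as [[Hl|He]|Hl]; auto; exfalso.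
    - assert (S (x + y) <= x' + y') by lia.
      assert (S (x+y) * S (S (x+y)) <= (x'+y') * S (x'+y')) by (apply Nat.mul_le_mono; lia).
      nia.
    - assert (S (x' + y') <= x + y) by lia.
      assert (S (x'+y') * S (S (x'+y')) <= (x+y) * S (x+y)) by (apply Nat.mul_le_mono; lia).
      nia. }
  rewrite H0 in H. lia.
Qed.

Lemma P_ge : forall x y, x <= P x y /\ y <= P x y.
Proof. unfold P; intros; nia. Qed.

Fixpoint uncp (g : nat) : nat * nat :=
  match g with
  | 0 => (0, 0)
  | S g' => let (x, y) := uncp g' in
            match x with 0 => (S y, 0) | S x' => (x', S y) end
  end.

Lemma uncp_spec : forall g x y, uncp g = (x, y) -> g + g = P x y.
Proof.
  induction g; simpl; intros x y H.
  - inversion H; subst; reflexivity.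
  - destruct (uncp g) as [x0 y0] eqn:E. specialize (IHg _ _ eq_refl).
    destruct x0; inversion H; subst; unfold P in *; nia.
Qed.

Lemma uncp_P : forall g x y, g + g = P x y -> uncp g = (x, y).
Proof.
  intros g x y H. destruct (uncp g) as [a b] eqn:E.
  apply uncp_spec in E. rewrite H in E. apply P_inj in E. destruct E; subst; auto.
Qed.

Lemma uncp_le : forall g x y, uncp g = (x, y) -> x <= g /\ y <= g.
Proof. intros g x y H. apply uncp_spec in H. unfold P in H. nia. Qed.

Fixpoint tri (s : nat) : nat := match s with 0 => 0 | S s' => tri s' + S s' end.
Lemma tri_spec : forall s, tri s + tri s = s * S s.
Proof. induction s; simpl; nia. Qed.

Definition cpv (x y : nat) : nat := tri (x + y) + y.
Lemma cpv_spec : forall x y, cpv x y + cpv x y = P x y.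
Proof. intros; unfold cpv, P. pose proof (tri_spec (x+y)). lia. Qed.
Lemma uncp_cpv : forall x y, uncp (cpv x y) = (x, y).
Proof. intros; apply uncp_P, cpv_spec. Qed.

Fixpoint lcode (l : list nat) : nat :=
  match l with nil => 0 | a :: l' => S (P a (lcode l')) end.
Definition lenv (l : list nat) : nat -> nat := fun i => nth i l 0.

Fixpoint dect (n : nat) (t : nat) : term :=
  match n with 0 => tzero | S n' =>
  match t with 0 => tzero | S g =>
    let (tag, r) := uncp g in
    match tag with
    | 0 => tvar r
    | 1 => tsucc (dect n' r)
    | 2 => let (u, v) := uncp r in tplus (dect n' u) (dect n' v)
    | 3 => let (u, v) := uncp r in tmult (dect n' u) (dect n' v)
    | _ => tzero
    end end end.

Lemma dect_fuel : forall n m t, t < n -> t < m -> dect n t = dect m t.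
Proof.
  induction n; intros m t H1 H2; [lia|]. destruct m; [lia|].
  destruct t; simpl; auto.
  destruct (uncp t) as [tag r] eqn:E. pose proof (uncp_le _ _ _ E).
  destruct tag as [|[|[|[|tag]]]]; auto.
  - f_equal; apply IHn; lia.
  - destruct (uncp r) as [u v] eqn:E2. pose proof (uncp_le _ _ _ E2). f_equal; apply IHn; lia.
  - destruct (uncp r) as [u v] eqn:E2. pose proof (uncp_le _ _ _ E2). f_equal; apply IHn; lia.
Qed.

Definition Dt (t : nat) : term := dect (S t) t.

Lemma Dt_unfold : forall g, Dt (S g) =
    let (tag, r) := uncp g in
    match tag with
    | 0 => tvar r
    | 1 => tsucc (Dt r)
    | 2 => let (u, v) := uncp r in tplus (Dt u) (Dt v)
    | 3 => let (u, v) := uncp r in tmult (Dt u) (Dt v)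
    | _ => tzero
    end.
Proof.
  intros g. unfold Dt at 1. 
  match goal with |- dect (S ?n) (S ?g) = _ =>
    change (dect (S n) (S g)) with (let (tag, r) := uncp g in
    match tag with
    | 0 => tvar r
    | 1 => tsucc (dect n r)
    | 2 => let (u, v) := uncp r in tplus (dect n u) (dect n v)
    | 3 => let (u, v) := uncp r in tmult (dect n u) (dect n v)
    | _ => tzero
    end) end.
  destruct (uncp g) as [tag r] eqn:E. pose proof (uncp_le _ _ _ E).
  destruct tag as [|[|[|[|tag]]]]; auto.
  - f_equal; apply dect_fuel; lia.
  - destruct (uncp r) as [u v] eqn:E2. pose proof (uncp_le _ _ _ E2). f_equal; apply dect_fuel; lia.
  - destruct (uncp r) as [u v] eqn:E2. pose proof (uncp_le _ _ _ E2). f_equal; apply dect_fuel; lia.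
Qed.

Lemma Dt_0 : Dt 0 = tzero. Proof. reflexivity. Qed.

Definition ffalse : formula := flt tzero tzero.

Fixpoint decf (n : nat) (f : nat) : formula :=
  match n with 0 => ffalse | S n' =>
  match f with 0 => ffalse | S g =>
    let (tag, r) := uncp g in
    let (u, v) := uncp r in
    match tag with
    | 0 => feq (Dt u) (Dt v)
    | 1 => flt (Dt u) (Dt v)
    | 2 => fnot (decf n' r)
    | 3 => fand (decf n' u) (decf n' v)
    | 4 => forr (decf n' u) (decf n' v)
    | 5 => fbex (Dt u) (decf n' v)
    | 6 => fball (Dt u) (decf n' v)
    | 7 => fmem u (Dt v)
    | _ => ffalse
    end end end.

Lemma decf_fuel : forall n m f, f < n -> f < m -> decf n f = decf m f.
Proof.
  induction n; intros m f H1 H2; [lia|]. destruct m; [lia|].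
  destruct f; simpl; auto.
  destruct (uncp f) as [tag r] eqn:E. pose proof (uncp_le _ _ _ E).
  destruct (uncp r) as [u v] eqn:E2. pose proof (uncp_le _ _ _ E2).
  destruct tag as [|[|[|[|[|[|[|[|tag]]]]]]]]; auto; f_equal; apply IHn; lia.
Qed.

Definition Df (f : nat) : formula := decf (S f) f.

Lemma Df_unfold : forall g, Df (S g) =
    let (tag, r) := uncp g in
    let (u, v) := uncp r in
    match tag with
    | 0 => feq (Dt u) (Dt v)
    | 1 => flt (Dt u) (Dt v)
    | 2 => fnot (Df r)
    | 3 => fand (Df u) (Df v)
    | 4 => forr (Df u) (Df v)
    | 5 => fbex (Dt u) (Df v)
    | 6 => fball (Dt u) (Df v)
    | 7 => fmem u (Dt v)
    | _ => ffalse
    end.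
Proof.
  intros g. unfold Df at 1.
  match goal with |- decf (S ?n) (S ?g) = _ =>
    change (decf (S n) (S g)) with (let (tag, r) := uncp g in
    let (u, v) := uncp r in
    match tag with
    | 0 => feq (Dt u) (Dt v)
    | 1 => flt (Dt u) (Dt v)
    | 2 => fnot (decf n r)
    | 3 => fand (decf n u) (decf n v)
    | 4 => forr (decf n u) (decf n v)
    | 5 => fbex (Dt u) (decf n v)
    | 6 => fball (Dt u) (decf n v)
    | 7 => fmem u (Dt v)
    | _ => ffalse
    end) end.
  destruct (uncp g) as [tag r] eqn:E. pose proof (uncp_le _ _ _ E).
  destruct (uncp r) as [u v] eqn:E2. pose proof (uncp_le _ _ _ E2).
  destruct tag as [|[|[|[|[|[|[|[|tag]]]]]]]]; auto; f_equal; apply decf_fuel; lia.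
Qed.

Lemma Df_0 : Df 0 = ffalse. Proof. reflexivity. Qed.

Fixpoint enct (t : term) : nat :=
  match t with
  | tvar i => S (cpv 0 i)
  | tzero => 0
  | tsucc u => S (cpv 1 (enct u))
  | tplus u v => S (cpv 2 (cpv (enct u) (enct v)))
  | tmult u v => S (cpv 3 (cpv (enct u) (enct v)))
  end.

Lemma Dt_enct : forall t, Dt (enct t) = t.
Proof.
  induction t; simpl; auto; rewrite Dt_unfold, uncp_cpv; try rewrite uncp_cpv; congruence.
Qed.

Fixpoint encf (p : formula) : nat :=
  match p with
  | feq u v => S (cpv 0 (cpv (enct u) (enct v)))
  | flt u v => S (cpv 1 (cpv (enct u) (enct v)))
  | fnot q => S (cpv 2 (encf q))
  | fand q r => S (cpv 3 (cpv (encf q) (encf r)))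
  | forr q r => S (cpv 4 (cpv (encf q) (encf r)))
  | fbex u q => S (cpv 5 (cpv (enct u) (encf q)))
  | fball u q => S (cpv 6 (cpv (enct u) (encf q)))
  | fmem i u => S (cpv 7 (cpv i (enct u)))
  | fex _ => 0
  | fall _ => 0
  end.

Lemma Df_encf : forall p, bounded p -> Df (encf p) = p.
Proof.
  induction p; simpl; intros Hb; try contradiction;
  rewrite Df_unfold, uncp_cpv; try rewrite uncp_cpv; rewrite ?Dt_enct; auto.
  - destruct (uncp (encf p)) as [u v]. rewrite IHp; auto.
  - rewrite IHp1, IHp2; tauto.
  - rewrite IHp1, IHp2; tauto.
  - rewrite IHp; auto.
  - rewrite IHp; auto.
Qed.

Definition J (k x s v : nat) : nat := P (P k x) (P s v).

Lemma J_inj : forall k x s v k' x' s' v', J k x s v = J k' x' s' v' ->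
  k = k' /\ x = x' /\ s = s' /\ v = v'.
Proof.
  unfold J; intros. apply P_inj in H as [H1 H2].
  apply P_inj in H1 as [? ?]; apply P_inj in H2 as [? ?]; auto.
Qed.

Lemma J_ge : forall k x s v, k <= J k x s v /\ x <= J k x s v /\ s <= J k x s v /\ v <= J k x s v.
Proof.
  unfold J; intros. pose proof (P_ge k x); pose proof (P_ge s v);
  pose proof (P_ge (P k x) (P s v)); lia.
Qed.

Section Just.
Variable M : nat -> Prop.

Definition JV (i s v : nat) : Prop :=
  (s = 0 /\ v = 0) \/
  exists a s', s = S (P a s') /\ ((i = 0 /\ v = a) \/ exists i', i = S i' /\ M (J 2 i' s' v)).

Definition JT (t s v : nat) : Prop :=
  (t = 0 /\ v = 0) \/
  exists g tag r u u', t = S g /\ g + g = P tag r /\ r + r = P u u' /\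
   ((tag = 0 /\ M (J 2 r s v))
 \/ (tag = 1 /\ exists w, M (J 0 r s w) /\ v = S w)
 \/ (tag = 2 /\ exists w1 w2, M (J 0 u s w1) /\ M (J 0 u' s w2) /\ v = w1 + w2)
 \/ (tag = 3 /\ exists w1 w2, M (J 0 u s w1) /\ M (J 0 u' s w2) /\ v = w1 * w2)
 \/ (3 < tag /\ v = 0)).

Definition JF (f s b : nat) : Prop :=
  (f = 0 /\ b = 0) \/
  exists g tag r u u', f = S g /\ g + g = P tag r /\ r + r = P u u' /\
   ((tag = 0 /\ exists w1 w2, M (J 0 u s w1) /\ M (J 0 u' s w2) /\
        ((b = 1 /\ w1 = w2) \/ (b = 0 /\ (w1 < w2 \/ w2 < w1))))
 \/ (tag = 1 /\ exists w1 w2, M (J 0 u s w1) /\ M (J 0 u' s w2) /\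
        ((b = 1 /\ w1 < w2) \/ (b = 0 /\ w2 < S w1)))
 \/ (tag = 2 /\ ((b = 1 /\ M (J 1 r s 0)) \/ (b = 0 /\ M (J 1 r s 1))))
 \/ (tag = 3 /\ ((b = 1 /\ M (J 1 u s 1) /\ M (J 1 u' s 1)) \/
                 (b = 0 /\ (M (J 1 u s 0) \/ M (J 1 u' s 0)))))
 \/ (tag = 4 /\ ((b = 1 /\ (M (J 1 u s 1) \/ M (J 1 u' s 1))) \/
                 (b = 0 /\ M (J 1 u s 0) /\ M (J 1 u' s 0))))
 \/ (tag = 5 /\ exists w, M (J 0 u s w) /\
        ((b = 1 /\ exists a, a < w /\ M (J 1 u' (S (P a s)) 1)) \/
         (b = 0 /\ forall a, a < w -> M (J 1 u' (S (P a s)) 0))))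
 \/ (tag = 6 /\ exists w, M (J 0 u s w) /\
        ((b = 1 /\ forall a, a < w -> M (J 1 u' (S (P a s)) 1)) \/
         (b = 0 /\ exists a, a < w /\ M (J 1 u' (S (P a s)) 0))))
 \/ (6 < tag /\ b = 0)).

Definition Just (j : nat) : Prop :=
  exists k x s v, j = J k x s v /\
   ((k = 0 /\ JT x s v) \/ (k = 1 /\ JF x s v) \/ (k = 2 /\ JV x s v)).

End Just.

Definition closedM (M : nat -> Prop) := forall j, M j -> Just M j.

Lemma Just_inv : forall M k x s v, closedM M -> M (J k x s v) ->
  (k = 0 /\ JT M x s v) \/ (k = 1 /\ JF M x s v) \/ (k = 2 /\ JV M x s v).
Proof.
  intros M k x s v HC HM. destruct (HC _ HM) as (k' & x' & s' & v' & E & H).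
  apply J_inj in E as (-> & -> & -> & ->). auto.
Qed.

Lemma lenv_cons : forall a l i, scons a (lenv l) i = lenv (a :: l) i.
Proof. intros a l [|i]; reflexivity. Qed.

Lemma lcode_inv : forall l a s', lcode l = S (P a s') -> exists l', l = a :: l' /\ lcode l' = s'.
Proof.
  intros [|b l] a s' H; simpl in H; [discriminate|]. injection H as H.
  apply P_inj in H as [-> <-]. eauto.
Qed.

Section Sound.
Variable M : nat -> Prop.
Hypothesis HC : closedM M.

Lemma sound_V : forall i l v, M (J 2 i (lcode l) v) -> lenv l i = v.
Proof.
  induction i; intros l v HM; destruct (Just_inv _ _ _ _ _ HC HM) as [[? _]|[[? _]|[_ H]]];
    try discriminate;
  destruct H as [[Hs Hv]|(a & s' & Hs & H)].
  - destruct l; simpl in Hs; [subst; reflexivity|discriminate].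
  - apply lcode_inv in Hs as (l' & -> & Hl).
    destruct H as [[_ ->]|(i' & Hi & _)]; [reflexivity|discriminate].
  - destruct l; simpl in Hs; [subst; reflexivity|discriminate].
  - apply lcode_inv in Hs as (l' & -> & Hl). subst s'.
    destruct H as [[Hi _]|(i' & Hi & HM')]; [discriminate|].
    injection Hi as <-. apply IHi in HM'. exact HM'.
Qed.

Lemma sound_T : forall t l v, M (J 0 t (lcode l) v) -> teval (lenv l) (Dt t) = v.
Proof.
  induction t as [t IH] using lt_wf_ind. intros l v HM.
  destruct (Just_inv _ _ _ _ _ HC HM) as [[_ H]|[[? _]|[? _]]]; try discriminate.
  destruct H as [[-> ->]|(g & tag & r & u & u' & -> & Hg & Hr & H)]; [reflexivity|].
  rewrite Dt_unfold, (uncp_P _ _ _ Hg).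
  pose proof (uncp_le _ _ _ (uncp_P _ _ _ Hg)) as [Lt Lr].
  pose proof (uncp_le _ _ _ (uncp_P _ _ _ Hr)) as [Lu Lu'].
  destruct H as [[-> H]|[[-> (w & H & ->)]|[[-> (w1 & w2 & H1 & H2 & ->)]|[[-> (w1 & w2 & H1 & H2 & ->)]|[Ht ->]]]]].
  - simpl. apply sound_V; auto.
  - simpl. f_equal. apply (IH r); auto; lia.
  - rewrite (uncp_P _ _ _ Hr). simpl. f_equal; [apply (IH u)|apply (IH u')]; auto; lia.
  - rewrite (uncp_P _ _ _ Hr). simpl. f_equal; [apply (IH u)|apply (IH u')]; auto; lia.
  - destruct tag as [|[|[|[|tag]]]]; try lia. reflexivity.
Qed.

Lemma sound_F : forall f l b, M (J 1 f (lcode l) b) ->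
  (b = 1 /\ sat no_reals (lenv l) (Df f)) \/ (b = 0 /\ ~ sat no_reals (lenv l) (Df f)).
Proof.
  induction f as [f IH] using lt_wf_ind. intros l b HM.
  destruct (Just_inv _ _ _ _ _ HC HM) as [[? _]|[[_ H]|[? _]]]; try discriminate.
  destruct H as [[-> ->]|(g & tag & r & u & u' & -> & Hg & Hr & H)].
  { right. split; auto. simpl. lia. }
  rewrite Df_unfold, (uncp_P _ _ _ Hg), (uncp_P _ _ _ Hr).
  pose proof (uncp_le _ _ _ (uncp_P _ _ _ Hg)) as [Lt Lr].
  pose proof (uncp_le _ _ _ (uncp_P _ _ _ Hr)) as [Lu Lu'].
  assert (Hu : u < S g) by lia. assert (Hu' : u' < S g) by lia. assert (Hr' : r < S g) by lia.
  destruct H as [[-> H]|[[-> H]|[[-> H]|[[-> H]|[[-> H]|[[-> H]|[[-> H]|[Ht ->]]]]]]]]; simpl.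
  - destruct H as (w1 & w2 & H1 & H2 & H). apply sound_T in H1, H2. rewrite H1, H2. lia.
  - destruct H as (w1 & w2 & H1 & H2 & H). apply sound_T in H1, H2. rewrite H1, H2. lia.
  - destruct H as [[-> H]|[-> H]]; apply IH in H; auto; intuition; discriminate.
  - destruct H as [[-> [H1 H2]]|[-> [H1|H1]]].
    + apply IH in H1; apply IH in H2; auto. intuition; discriminate.
    + apply IH in H1; auto. intuition; discriminate.
    + apply IH in H1; auto. intuition; discriminate.
  - destruct H as [[-> [H1|H1]]|[-> [H1 H2]]].
    + apply IH in H1; auto. intuition; discriminate.
    + apply IH in H1; auto. intuition; discriminate.
    + apply IH in H1; apply IH in H2; auto. intuition; discriminate.
  - destruct H as (w & Hw & H). apply sound_T in Hw. rewrite Hw.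
    destruct H as [[-> (a & Ha & H)]|[-> H]].
    + left; split; auto. exists a; split; auto. apply (IH u' Hu' (a :: l)) in H.
      destruct H as [[_ H]|[? _]]; [|discriminate].
      eapply sat_ext; [|exact H]. intros; symmetry; apply lenv_cons.
    + right; split; auto. intros (a & Ha & Hs). specialize (H a Ha).
      apply (IH u' Hu' (a :: l)) in H. destruct H as [[? _]|[_ H]]; [discriminate|].
      apply H. eapply sat_ext; [|exact Hs]. intros; apply lenv_cons.
  - destruct H as (w & Hw & H). apply sound_T in Hw. rewrite Hw.
    destruct H as [[-> H]|[-> (a & Ha & H)]].
    + left; split; auto. intros a Ha. specialize (H a Ha).
      apply (IH u' Hu' (a :: l)) in H. destruct H as [[_ H]|[? _]]; [|discriminate].
      eapply sat_ext; [|exact H]. intros; symmetry; apply lenv_cons.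
    + right; split; auto. intros Hs. specialize (Hs a Ha).
      apply (IH u' Hu' (a :: l)) in H. destruct H as [[? _]|[_ H]]; [discriminate|].
      apply H. eapply sat_ext; [|exact Hs]. intros; apply lenv_cons.
  - right; split; auto.
    destruct tag as [|[|[|[|[|[|[|[|tag]]]]]]]]; try lia; simpl; [unfold no_reals; congruence|lia].
Qed.

End Sound.

Definition closedL (L : list nat) := forall j, In j L -> Just (fun x => In x L) j.

Lemma JT_mono : forall (M M' : nat -> Prop), (forall x, M x -> M' x) -> forall t s v, JT M t s v -> JT M' t s v.
Proof.
  intros M M' H t s v HJ. unfold JT in *.
  destruct HJ as [?|(g & tag & r & u & u' & E1 & E2 & E3 & HJ)]; [left; auto|right].
  exists g, tag, r, u, u'; repeat split; auto.
  destruct HJ as [[? ?]|[[? (w & ? & ?)]|[[? (w1 & w2 & ? & ? & ?)]|[[? (w1 & w2 & ? & ? & ?)]|?]]]].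
  - left; auto.
  - right; left; split; eauto.
  - right; right; left; split; eauto 7.
  - right; right; right; left; split; eauto 7.
  - right; right; right; right; auto.
Qed.

Lemma JV_mono : forall (M M' : nat -> Prop), (forall x, M x -> M' x) -> forall t s v, JV M t s v -> JV M' t s v.
Proof.
  intros M M' H t s v HJ. unfold JV in *.
  destruct HJ as [?|(a & s' & E & [?|(i' & ? & ?)])]; [left; auto| |]; right; exists a, s'; split; auto.
  right; eauto.
Qed.

Lemma JF_mono : forall (M M' : nat -> Prop), (forall x, M x -> M' x) -> forall t s v, JF M t s v -> JF M' t s v.
Proof.
  intros M M' H t s v HJ. unfold JF in *.
  destruct HJ as [?|(g & tag & r & u & u' & E1 & E2 & E3 & HJ)]; [left; auto|right].
  exists g, tag, r, u, u'; repeat split; auto.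
  destruct HJ as [[? (w1 & w2 & ? & ? & ?)]|[[? (w1 & w2 & ? & ? & ?)]|[[? HJ]|[[? HJ]|[[? HJ]|[[? (w & ? & HJ)]|[[? (w & ? & HJ)]|?]]]]]]].
  - left; split; eauto 7.
  - right; left; split; eauto 7.
  - do 2 right; left; split; auto. intuition.
  - do 3 right; left; split; auto. intuition.
  - do 4 right; left; split; auto. intuition.
  - do 5 right; left; split; auto. exists w; split; auto.
    destruct HJ as [[? (a & ? & ?)]|[? HJ]]; [left; split; eauto|right; split; auto].
  - do 6 right; left; split; auto. exists w; split; auto.
    destruct HJ as [[? HJ]|[? (a & ? & ?)]]; [left; split; auto|right; split; eauto].
  - do 7 right; auto.
Qed.

Lemma Just_mono : forall (M M' : nat -> Prop), (forall x, M x -> M' x) -> forall j, Just M j -> Just M' j.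
Proof.
  intros M M' H j (k & x & s & v & E & HJ). exists k, x, s, v; split; auto.
  destruct HJ as [[? HJ]|[[? HJ]|[? HJ]]].
  - left; split; auto; eapply JT_mono; eauto.
  - right; left; split; auto; eapply JF_mono; eauto.
  - right; right; split; auto; eapply JV_mono; eauto.
Qed.

Lemma closedL_app : forall L1 L2, closedL L1 -> closedL L2 -> closedL (L1 ++ L2).
Proof.
  intros L1 L2 H1 H2 j Hj. apply in_app_or in Hj as [Hj|Hj].
  - eapply Just_mono; [|apply H1; auto]. intros; apply in_or_app; auto.
  - eapply Just_mono; [|apply H2; auto]. intros; apply in_or_app; auto.
Qed.

Lemma closedL_cons : forall j L, closedL L -> Just (fun x => In x (j :: L)) j -> closedL (j :: L).
Proof.
  intros j L H Hj x [<-|Hx]; auto.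
  eapply Just_mono; [|apply H; auto]. intros; simpl; auto.
Qed.

Lemma closedL_nil : closedL nil.
Proof. intros j []. Qed.

Lemma comp_V : forall l i, exists L, closedL L /\ In (J 2 i (lcode l) (lenv l i)) L.
Proof.
  induction l as [|a l IH]; intros i.
  - assert (lenv nil i = 0) as -> by (destruct i; reflexivity).
    exists (J 2 i 0 0 :: nil). split; [|simpl; auto].
    apply closedL_cons; [apply closedL_nil|].
    exists 2, i, 0, 0. split; auto. right; right; split; auto. left; destruct i; auto.
  - destruct i as [|i].
    + exists (J 2 0 (lcode (a :: l)) a :: nil). split; [|simpl; auto].
      apply closedL_cons; [apply closedL_nil|].
      exists 2, 0, (lcode (a :: l)), a. split; auto. right; right; split; auto.
      right. exists a, (lcode l). split; auto.
    + destruct (IH i) as (L & HL & Hin).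
      exists (J 2 (S i) (lcode (a :: l)) (lenv l i) :: L). split; [|simpl; auto].
      apply closedL_cons; auto.
      exists 2, (S i), (lcode (a :: l)), (lenv l i). split; auto. right; right; split; auto.
      right. exists a, (lcode l). split; auto. right. exists i; split; auto. simpl; auto.
Qed.

Lemma in_l : forall (x : nat) j L1 L2, In x L1 -> In x (j :: L1 ++ L2).
Proof. intros; simpl; right; apply in_or_app; auto. Qed.
Lemma in_r : forall (x : nat) j L1 L2, In x L2 -> In x (j :: L1 ++ L2).
Proof. intros; simpl; right; apply in_or_app; auto. Qed.
Lemma in_m : forall (x : nat) j L, In x L -> In x (j :: L).
Proof. intros; simpl; auto. Qed.

Lemma uncp_surj : forall g, exists x y, g + g = P x y /\ uncp g = (x, y).
Proof. intros g. destruct (uncp g) as [x y] eqn:E. exists x, y. split; auto. apply uncp_spec; auto. Qed.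

Lemma comp_T : forall t l, exists L, closedL L /\
  In (J 0 t (lcode l) (teval (lenv l) (Dt t))) L.
Proof.
  induction t as [t IH] using lt_wf_ind. intros l.
  destruct t as [|g].
  { exists (J 0 0 (lcode l) 0 :: nil). split; [|simpl; auto].
    apply closedL_cons; [apply closedL_nil|].
    exists 0, 0, (lcode l), 0. split; auto. left; split; auto. left; auto. }
  destruct (uncp_surj g) as (tag & r & Hg & Eg).
  destruct (uncp_surj r) as (u & u' & Hr & Er).
  pose proof (uncp_le _ _ _ Eg) as [Lt Lr].
  pose proof (uncp_le _ _ _ Er) as [Lu Lu'].
  rewrite Dt_unfold, Eg.
  set (s := lcode l).
  destruct tag as [|[|[|[|tag]]]].
  - destruct (comp_V l r) as (L & HL & Hin).
    eexists (_ :: L). split; [|simpl; left; reflexivity].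
    apply closedL_cons; auto.
    eexists 0, _, s, _. split; [reflexivity|]. left; split; auto. right.
    exists g, 0, r, u, u'. repeat split; auto. left; split; auto. simpl. apply in_m; auto.
  - destruct (IH r ltac:(lia) l) as (L & HL & Hin).
    eexists (_ :: L). split; [|simpl; left; reflexivity].
    apply closedL_cons; auto.
    eexists 0, _, s, _. split; [reflexivity|]. left; split; auto. right.
    exists g, 1, r, u, u'. repeat split; auto. right; left; split; auto.
    eexists; split; [apply in_m; exact Hin|reflexivity].
  - rewrite Er.
    destruct (IH u ltac:(lia) l) as (L1 & HL1 & Hin1).
    destruct (IH u' ltac:(lia) l) as (L2 & HL2 & Hin2).
    eexists (_ :: L1 ++ L2). split; [|simpl; left; reflexivity].
    apply closedL_cons; [apply closedL_app; auto|].
    eexists 0, _, s, _. split; [reflexivity|]. left; split; auto. right.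
    exists g, 2, r, u, u'. repeat split; auto. right; right; left; split; auto.
    do 2 eexists; split; [apply in_l; exact Hin1|split; [apply in_r; exact Hin2|reflexivity]].
  - rewrite Er.
    destruct (IH u ltac:(lia) l) as (L1 & HL1 & Hin1).
    destruct (IH u' ltac:(lia) l) as (L2 & HL2 & Hin2).
    eexists (_ :: L1 ++ L2). split; [|simpl; left; reflexivity].
    apply closedL_cons; [apply closedL_app; auto|].
    eexists 0, _, s, _. split; [reflexivity|]. left; split; auto. right.
    exists g, 3, r, u, u'. repeat split; auto. right; right; right; left; split; auto.
    do 2 eexists; split; [apply in_l; exact Hin1|split; [apply in_r; exact Hin2|reflexivity]].
  - eexists (_ :: nil). split; [|simpl; left; reflexivity].
    apply closedL_cons; [apply closedL_nil|].
    eexists 0, _, s, _. split; [reflexivity|]. left; split; auto. right.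
    exists g, (S (S (S (S tag)))), r, u, u'. repeat split; auto. do 4 right; split; [lia|reflexivity].
Qed.

Lemma union_cert : forall (X : nat -> nat) w,
  (forall a, a < w -> exists L, closedL L /\ In (X a) L) ->
  exists L, closedL L /\ forall a, a < w -> In (X a) L.
Proof.
  intros X w. induction w; intros H.
  - exists nil. split; [apply closedL_nil|intros; lia].
  - destruct IHw as (L1 & H1 & I1); [intros; apply H; lia|].
    destruct (H w ltac:(lia)) as (L2 & H2 & I2).
    exists (L1 ++ L2). split; [apply closedL_app; auto|].
    intros a Ha. apply in_or_app. destruct (Nat.eq_dec a w); [subst; auto|left; apply I1; lia].
Qed.

Lemma sat_cons : forall a l p, sat no_reals (scons a (lenv l)) p <-> sat no_reals (lenv (a :: l)) p.
Proof. intros; apply sat_ext; apply lenv_cons. Qed.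

Ltac topF tag g r u u' :=
  apply closedL_cons; [repeat apply closedL_app; auto|];
  eexists 1, _, _, _; split; [reflexivity|]; right; left; split; [reflexivity|]; right;
  exists g, tag, r, u, u'; split; [reflexivity|]; split; [assumption|]; split; [assumption|].

Lemma comp_F : forall f l, exists L b, closedL L /\ In (J 1 f (lcode l) b) L /\
  ((b = 1 /\ sat no_reals (lenv l) (Df f)) \/ (b = 0 /\ ~ sat no_reals (lenv l) (Df f))).
Proof.
  induction f as [f IH] using lt_wf_ind. intros l.
  destruct f as [|g].
  { exists (J 1 0 (lcode l) 0 :: nil), 0. split; [|split; [simpl; auto|]].
    - apply closedL_cons; [apply closedL_nil|].
      exists 1, 0, (lcode l), 0. split; auto. right; left; split; auto. left; auto.
    - right; split; auto. simpl. lia. }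
  destruct (uncp_surj g) as (tag & r & Hg & Eg).
  destruct (uncp_surj r) as (u & u' & Hr & Er).
  pose proof (uncp_le _ _ _ Eg) as [Lt Lr].
  pose proof (uncp_le _ _ _ Er) as [Lu Lu'].
  rewrite Df_unfold, Eg, Er.
  destruct tag as [|[|[|[|[|[|[|tag]]]]]]].
  - destruct (comp_T u l) as (L1 & H1 & I1). destruct (comp_T u' l) as (L2 & H2 & I2).
    simpl sat.
    destruct (Nat.eq_dec (teval (lenv l) (Dt u)) (teval (lenv l) (Dt u'))) as [E|E].
    + exists (J 1 (S g) (lcode l) 1 :: L1 ++ L2), 1. split; [|split; [simpl; auto|left; auto]].
      topF 0 g r u u'. left; split; auto. do 2 eexists; split; [apply in_l; exact I1|].
      split; [apply in_r; exact I2|]. left; auto.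
    + exists (J 1 (S g) (lcode l) 0 :: L1 ++ L2), 0. split; [|split; [simpl; auto|right; auto]].
      topF 0 g r u u'. left; split; auto. do 2 eexists; split; [apply in_l; exact I1|].
      split; [apply in_r; exact I2|]. right; split; auto; lia.
  - destruct (comp_T u l) as (L1 & H1 & I1). destruct (comp_T u' l) as (L2 & H2 & I2).
    simpl sat.
    destruct (lt_dec (teval (lenv l) (Dt u)) (teval (lenv l) (Dt u'))) as [E|E].
    + exists (J 1 (S g) (lcode l) 1 :: L1 ++ L2), 1. split; [|split; [simpl; auto|left; auto]].
      topF 1 g r u u'. right; left; split; auto. do 2 eexists; split; [apply in_l; exact I1|].
      split; [apply in_r; exact I2|]. left; auto.
    + exists (J 1 (S g) (lcode l) 0 :: L1 ++ L2), 0. split; [|split; [simpl; auto|right; auto]].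
      topF 1 g r u u'. right; left; split; auto. do 2 eexists; split; [apply in_l; exact I1|].
      split; [apply in_r; exact I2|]. right; split; auto; lia.
  - destruct (IH r ltac:(lia) l) as (L1 & b1 & H1 & I1 & S1). simpl sat.
    destruct S1 as [[-> S1]|[-> S1]].
    + exists (J 1 (S g) (lcode l) 0 :: L1), 0. split; [|split; [simpl; auto|right; auto]].
      topF 2 g r u u'. do 2 right; left; split; auto. right; split; auto. apply in_m; auto.
    + exists (J 1 (S g) (lcode l) 1 :: L1), 1. split; [|split; [simpl; auto|left; auto]].
      topF 2 g r u u'. do 2 right; left; split; auto. left; split; auto. apply in_m; auto.
  - destruct (IH u ltac:(lia) l) as (L1 & b1 & H1 & I1 & S1).
    destruct (IH u' ltac:(lia) l) as (L2 & b2 & H2 & I2 & S2). simpl sat.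
    destruct S1 as [[-> S1]|[-> S1]]; [destruct S2 as [[-> S2]|[-> S2]]|].
    + exists (J 1 (S g) (lcode l) 1 :: L1 ++ L2), 1. split; [|split; [simpl; auto|left; auto]].
      topF 3 g r u u'. do 3 right; left; split; auto. left; split; auto.
      split; [apply in_l|apply in_r]; auto.
    + exists (J 1 (S g) (lcode l) 0 :: L1 ++ L2), 0. split; [|split; [simpl; auto|right; split; tauto]].
      topF 3 g r u u'. do 3 right; left; split; auto. right; split; auto. right; apply in_r; auto.
    + exists (J 1 (S g) (lcode l) 0 :: L1 ++ L2), 0. split; [|split; [simpl; auto|right; split; tauto]].
      topF 3 g r u u'. do 3 right; left; split; auto. right; split; auto. left; apply in_l; auto.
  - destruct (IH u ltac:(lia) l) as (L1 & b1 & H1 & I1 & S1).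
    destruct (IH u' ltac:(lia) l) as (L2 & b2 & H2 & I2 & S2). simpl sat.
    destruct S1 as [[-> S1]|[-> S1]]; [|destruct S2 as [[-> S2]|[-> S2]]].
    + exists (J 1 (S g) (lcode l) 1 :: L1 ++ L2), 1. split; [|split; [simpl; auto|left; auto]].
      topF 4 g r u u'. do 4 right; left; split; auto. left; split; auto. left; apply in_l; auto.
    + exists (J 1 (S g) (lcode l) 1 :: L1 ++ L2), 1. split; [|split; [simpl; auto|left; auto]].
      topF 4 g r u u'. do 4 right; left; split; auto. left; split; auto. right; apply in_r; auto.
    + exists (J 1 (S g) (lcode l) 0 :: L1 ++ L2), 0. split; [|split; [simpl; auto|right; split; tauto]].
      topF 4 g r u u'. do 4 right; left; split; auto. right; split; auto.
      split; [apply in_l|apply in_r]; auto.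
  - destruct (comp_T u l) as (L1 & H1 & I1). simpl sat.
    set (w := teval (lenv l) (Dt u)) in *.
    destruct (classic (exists a, a < w /\ sat no_reals (lenv (a :: l)) (Df u'))) as [(a & Ha & Sa)|NS].
    + destruct (IH u' ltac:(lia) (a :: l)) as (L2 & b2 & H2 & I2 & S2).
      destruct S2 as [[-> _]|[-> S2]]; [|contradiction].
      exists (J 1 (S g) (lcode l) 1 :: L1 ++ L2), 1. split; [|split; [simpl; auto|left; split; [reflexivity|]]].
      * topF 5 g r u u'. do 5 right; left; split; auto. exists w; split; [apply in_l; auto|].
        left; split; auto. exists a; split; auto. apply in_r; auto.
      * exists a; split; auto; apply sat_cons; auto.
    + destruct (union_cert (fun a => J 1 u' (lcode (a :: l)) 0) w) as (L2 & H2 & I2).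
      { intros a Ha. destruct (IH u' ltac:(lia) (a :: l)) as (L2 & b2 & H2 & I2 & S2).
        destruct S2 as [[-> S2]|[-> _]]; [exfalso; apply NS; eauto|eauto]. }
      exists (J 1 (S g) (lcode l) 0 :: L1 ++ L2), 0. split; [|split; [simpl; auto|right; split; [reflexivity|]]].
      * topF 5 g r u u'. do 5 right; left; split; auto. exists w; split; [apply in_l; auto|].
        right; split; auto. intros a Ha. apply in_r; apply (I2 a Ha).
      * intros (a & Ha & Sa). apply NS. exists a; split; auto; apply sat_cons; auto.
  - destruct (comp_T u l) as (L1 & H1 & I1). simpl sat.
    set (w := teval (lenv l) (Dt u)) in *.
    destruct (classic (exists a, a < w /\ ~ sat no_reals (lenv (a :: l)) (Df u'))) as [(a & Ha & Sa)|NS].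
    + destruct (IH u' ltac:(lia) (a :: l)) as (L2 & b2 & H2 & I2 & S2).
      destruct S2 as [[-> S2]|[-> _]]; [contradiction|].
      exists (J 1 (S g) (lcode l) 0 :: L1 ++ L2), 0. split; [|split; [simpl; auto|right; split; [reflexivity|]]].
      * topF 6 g r u u'. do 6 right; left; split; auto. exists w; split; [apply in_l; auto|].
        right; split; auto. exists a; split; auto. apply in_r; auto.
      * intros Hs. apply Sa. specialize (Hs a Ha). apply sat_cons; auto.
    + destruct (union_cert (fun a => J 1 u' (lcode (a :: l)) 1) w) as (L2 & H2 & I2).
      { intros a Ha. destruct (IH u' ltac:(lia) (a :: l)) as (L2 & b2 & H2 & I2 & S2).
        destruct S2 as [[-> _]|[-> S2]]; [eauto|exfalso; apply NS; eauto]. }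
      exists (J 1 (S g) (lcode l) 1 :: L1 ++ L2), 1. split; [|split; [simpl; auto|left; split; [reflexivity|]]].
      * topF 6 g r u u'. do 6 right; left; split; auto. exists w; split; [apply in_l; auto|].
        left; split; auto. intros a Ha. apply in_r; apply (I2 a Ha).
      * intros a Ha; apply sat_cons; apply NNPP; intros N; apply NS; eauto.
  - exists (J 1 (S g) (lcode l) 0 :: nil), 0. split; [|split; [simpl; auto|right; split; [reflexivity|]]].
    + apply closedL_cons; [apply closedL_nil|].
      eexists 1, _, _, _; split; [reflexivity|]; right; left; split; [reflexivity|]; right.
      exists g, (S (S (S (S (S (S (S tag))))))), r, u, u'. repeat split; auto.
      do 7 right. split; [lia|auto].
    + destruct tag; simpl; [unfold no_reals; congruence|lia].
Qed.

Lemma fact_div : forall m k, 1 <= k <= m -> Nat.divide k (fact m).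
Proof.
  induction m; intros k Hk; [lia|].
  simpl fact. destruct (Nat.eq_dec k (S m)) as [->|Hne].
  - exists (fact m). lia.
  - apply Nat.divide_add_r; [apply IHm; lia|].
    apply Nat.divide_mul_r. apply IHm; lia.
Qed.

Definition Acode (d x : nat) := S (S x * d).

Lemma A_coprime : forall m x y, x < m -> y < m -> x <> y ->
  Nat.gcd (Acode (fact m) x) (Acode (fact m) y) = 1.
Proof.
  intros m.
  assert (Hgen : forall x y, x < y -> y < m -> Nat.gcd (Acode (fact m) x) (Acode (fact m) y) = 1).
  { intros x y Hxy Hy. set (d := fact m).
    set (g := Nat.gcd (Acode d x) (Acode d y)).
    assert (Gx : Nat.divide g (Acode d x)) by apply Nat.gcd_divide_l.
    assert (Gy : Nat.divide g (Acode d y)) by apply Nat.gcd_divide_r.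
    assert (Hgd : Nat.gcd g d = 1).
    { set (h := Nat.gcd g d).
      assert (Hh1 : Nat.divide h g) by apply Nat.gcd_divide_l.
      assert (Hh2 : Nat.divide h d) by apply Nat.gcd_divide_r.
      apply Nat.divide_1_r.
      apply (Nat.divide_add_cancel_r h (S x * d) 1).
      - apply Nat.divide_mul_r; exact Hh2.
      - assert (E1 : S x * d + 1 = Acode d x) by (unfold Acode; lia).
        rewrite E1. apply (Nat.divide_trans _ g); [exact Hh1|exact Gx]. }
    assert (G1 : Nat.divide g (d * (y - x))).
    { apply (Nat.divide_add_cancel_r g (Acode d x)); auto.
      assert (E1 : Acode d x + d * (y - x) = Acode d y) by (unfold Acode; nia). rewrite E1; auto. }
    apply Nat.gauss in G1; auto.
    assert (G2 : Nat.divide g d).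
    { eapply Nat.divide_trans; [exact G1|]. apply fact_div; lia. }
    apply Nat.divide_1_r. rewrite <- Hgd. apply Nat.gcd_greatest; auto. apply Nat.divide_refl. }
  intros x y Hx Hy Hne. destruct (lt_dec x y) as [H|H]; [apply Hgen; auto|].
  rewrite Nat.gcd_comm. apply Hgen; lia.
Qed.

Fixpoint prodA (d : nat) (L : list nat) : nat :=
  match L with nil => 1 | y :: L' => Acode d y * prodA d L' end.

Lemma prodA_div : forall m L, (forall y, In y L -> y < m) -> forall x, x < m ->
  (Nat.divide (Acode (fact m) x) (prodA (fact m) L) <-> In x L).
Proof.
  intros m L HL x Hx. split.
  - intros Hd. induction L as [|y L IH].
    + apply Nat.divide_1_r in Hd. unfold Acode in Hd. pose proof (lt_O_fact m). nia.
    + destruct (Nat.eq_dec x y) as [->|Hne]; [left; auto|right].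
      apply IH; [intros; apply HL; right; auto|].
      change (prodA (fact m) (y :: L)) with (Acode (fact m) y * prodA (fact m) L) in Hd.
      apply Nat.gauss in Hd; auto. apply A_coprime; auto. apply HL; left; auto.
  - intros Hin. clear HL. induction L as [|y L IH]; [destruct Hin|].
    destruct Hin as [->|Hin].
    + exists (prodA (fact m) L). change (prodA (fact m) (x :: L)) with (Acode (fact m) x * prodA (fact m) L). lia.
    + destruct IH as [q Hq]; auto.
      exists (q * Acode (fact m) y). change (prodA (fact m) (y :: L)) with (Acode (fact m) y * prodA (fact m) L). rewrite Hq. lia.
Qed.

Lemma finset_code : forall L : list nat, exists c d m, forall x,
  ((x < m /\ exists q, q * S (S x * d) = c) <-> In x L).
Proof.
  intros L. exists (prodA (fact (S (list_max L))) L), (fact (S (list_max L))), (S (list_max L)).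
  assert (HL : forall y, In y L -> y < S (list_max L)).
  { intros y Hy. assert (list_max L <= list_max L) by lia. apply list_max_le in H.
    rewrite Forall_forall in H. specialize (H y Hy). lia. }
  intros x. split.
  - intros [Hx [q Hq]]. apply (prodA_div _ L HL x Hx). exists q. unfold Acode. lia.
  - intros Hin. split; [apply HL; auto|]. apply (prodA_div _ L HL x (HL x Hin)) in Hin.
    destruct Hin as [q Hq]. exists q. unfold Acode in Hq. lia.
Qed.

Fixpoint num (n : nat) : term := match n with 0 => tzero | S k => tsucc (num k) end.
Definition Pt (a b : term) : term :=
  tplus (tmult (tplus a b) (tsucc (tplus a b))) (tplus b b).
Definition Jt (k x s v : term) : term := Pt (Pt k x) (Pt s v).

Lemma teval_num : forall rho n, teval rho (num n) = n.
Proof. induction n; simpl; auto. Qed.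
Lemma teval_Pt : forall rho a b, teval rho (Pt a b) = P (teval rho a) (teval rho b).
Proof. reflexivity. Qed.
Lemma teval_Jt : forall rho k x s v, teval rho (Jt k x s v) =
  J (teval rho k) (teval rho x) (teval rho s) (teval rho v).
Proof. reflexivity. Qed.

Definition memP (c d m x : nat) : Prop := x < m /\ exists q, q < S c /\ q * S (S x * d) = c.

(* ctx: 0=c 1=d 2=m 3=x *)
Definition memF : formula :=
  fand (flt (tvar 3) (tvar 2))
       (fbex (tsucc (tvar 0)) (feq (tmult (tvar 0) (tsucc (tmult (tsucc (tvar 4)) (tvar 2)))) (tvar 1))).

Lemma memF_sem : forall xi rho, sat xi rho memF <-> memP (rho 0) (rho 1) (rho 2) (rho 3).
Proof. intros; reflexivity. Qed.

Definition mem (c d m x : term) : formula := inst [c; d; m; x] memF.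

Lemma mem_sem : forall xi rho c d m x, sat xi rho (mem c d m x) <->
  memP (teval rho c) (teval rho d) (teval rho m) (teval rho x).
Proof. intros. unfold mem. rewrite sat_inst. reflexivity. Qed.

Section JB.
Variable M : nat -> Prop.
Variable m : nat.

Definition JV_b (i s v : nat) : Prop :=
  (s = 0 /\ v = 0) \/
  exists a, a < S s /\ exists s', s' < S s /\
   (s = S (P a s') /\ ((i = 0 /\ v = a) \/ exists i', i' < i /\ (i = S i' /\ M (J 2 i' s' v)))).

End JB.

(* ctx: 0=i 1=s 2=v 3=c 4=d 5=m *)
Definition JVF : formula :=
 forr (fand (feq (tvar 1) tzero) (feq (tvar 2) tzero))
  (fbex (tsucc (tvar 1))
   (fbex (tsucc (tvar 2))
    (fand (feq (tvar 3) (tsucc (Pt (tvar 1) (tvar 0))))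
     (forr (fand (feq (tvar 2) tzero) (feq (tvar 4) (tvar 1)))
      (fbex (tvar 2)
       (fand (feq (tvar 3) (tsucc (tvar 0)))
        (mem (tvar 6) (tvar 7) (tvar 8) (Jt (num 2) (tvar 0) (tvar 1) (tvar 5))))))))).

Lemma JVF_sem : forall xi rho, sat xi rho JVF <->
  JV_b (memP (rho 3) (rho 4) (rho 5)) (rho 0) (rho 1) (rho 2).
Proof. intros; reflexivity. Qed.

Section JB2.
Variable M : nat -> Prop.
Variable m : nat.

Definition JT_b (t s v : nat) : Prop :=
  (t = 0 /\ v = 0) \/
  exists g, g < t /\ exists tag, tag < t /\ exists r, r < t /\ exists u, u < t /\ exists u', u' < t /\
  (t = S g /\ (g + g = P tag r /\ (r + r = P u u' /\
   ((tag = 0 /\ M (J 2 r s v))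
 \/ ((tag = 1 /\ exists w, w < m /\ (M (J 0 r s w) /\ v = S w))
 \/ ((tag = 2 /\ exists w1, w1 < m /\ exists w2, w2 < m /\ (M (J 0 u s w1) /\ (M (J 0 u' s w2) /\ v = w1 + w2)))
 \/ ((tag = 3 /\ exists w1, w1 < m /\ exists w2, w2 < m /\ (M (J 0 u s w1) /\ (M (J 0 u' s w2) /\ v = w1 * w2)))
 \/ (3 < tag /\ v = 0)))))))).

Definition JF_b (f s b : nat) : Prop :=
  (f = 0 /\ b = 0) \/
  exists g, g < f /\ exists tag, tag < f /\ exists r, r < f /\ exists u, u < f /\ exists u', u' < f /\
  (f = S g /\ (g + g = P tag r /\ (r + r = P u u' /\
   ((tag = 0 /\ exists w1, w1 < m /\ exists w2, w2 < m /\ (M (J 0 u s w1) /\ (M (J 0 u' s w2) /\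
        ((b = 1 /\ w1 = w2) \/ (b = 0 /\ (w1 < w2 \/ w2 < w1))))))
 \/ ((tag = 1 /\ exists w1, w1 < m /\ exists w2, w2 < m /\ (M (J 0 u s w1) /\ (M (J 0 u' s w2) /\
        ((b = 1 /\ w1 < w2) \/ (b = 0 /\ w2 < S w1)))))
 \/ ((tag = 2 /\ ((b = 1 /\ M (J 1 r s 0)) \/ (b = 0 /\ M (J 1 r s 1))))
 \/ ((tag = 3 /\ ((b = 1 /\ (M (J 1 u s 1) /\ M (J 1 u' s 1))) \/
                 (b = 0 /\ (M (J 1 u s 0) \/ M (J 1 u' s 0)))))
 \/ ((tag = 4 /\ ((b = 1 /\ (M (J 1 u s 1) \/ M (J 1 u' s 1))) \/
                 (b = 0 /\ (M (J 1 u s 0) /\ M (J 1 u' s 0)))))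
 \/ ((tag = 5 /\ exists w, w < m /\ (M (J 0 u s w) /\
        ((b = 1 /\ exists a, a < w /\ M (J 1 u' (S (P a s)) 1)) \/
         (b = 0 /\ forall a, a < w -> M (J 1 u' (S (P a s)) 0)))))
 \/ ((tag = 6 /\ exists w, w < m /\ (M (J 0 u s w) /\
        ((b = 1 /\ forall a, a < w -> M (J 1 u' (S (P a s)) 1)) \/
         (b = 0 /\ exists a, a < w /\ M (J 1 u' (S (P a s)) 0)))))
 \/ (6 < tag /\ b = 0))))))))))).

Definition Just_b (j : nat) : Prop :=
  exists k, k < m /\ exists x, x < m /\ exists s, s < m /\ exists v, v < m /\
  (j = J k x s v /\ ((k = 0 /\ JT_b x s v) \/ ((k = 1 /\ JF_b x s v) \/ (k = 2 /\ JV_b M x s v)))).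

End JB2.

(* common prefix: ctx for body: u'=0,u=1,r=2,tag=3,g=4,t=5,... *)
Definition prefix5 (body : formula) : formula :=
 fbex (tvar 0) (fbex (tvar 1) (fbex (tvar 2) (fbex (tvar 3) (fbex (tvar 4)
  (fand (feq (tvar 5) (tsucc (tvar 4)))
  (fand (feq (tplus (tvar 4) (tvar 4)) (Pt (tvar 3) (tvar 2)))
  (fand (feq (tplus (tvar 2) (tvar 2)) (Pt (tvar 1) (tvar 0)))
   body))))))).

Definition memk (k : nat) (x : term) : formula := mem (tvar (8+k)) (tvar (9+k)) (tvar (10+k)) x.

(* ctx: 0=t 1=s 2=v 3=c 4=d 5=m ; in cases: u'=0,u=1,r=2,tag=3,g=4,t=5,s=6,v=7,c=8,d=9,m=10 *)
Definition JTF : formula :=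
 forr (fand (feq (tvar 0) tzero) (feq (tvar 2) tzero))
 (prefix5
  (forr (fand (feq (tvar 3) tzero) (memk 0 (Jt (num 2) (tvar 2) (tvar 6) (tvar 7))))
  (forr (fand (feq (tvar 3) (num 1)) (fbex (tvar 10)
          (fand (memk 1 (Jt tzero (tvar 3) (tvar 7) (tvar 0))) (feq (tvar 8) (tsucc (tvar 0))))))
  (forr (fand (feq (tvar 3) (num 2)) (fbex (tvar 10) (fbex (tvar 11)
          (fand (memk 2 (Jt tzero (tvar 3) (tvar 8) (tvar 1)))
           (fand (memk 2 (Jt tzero (tvar 2) (tvar 8) (tvar 0)))
            (feq (tvar 9) (tplus (tvar 1) (tvar 0))))))))
  (forr (fand (feq (tvar 3) (num 3)) (fbex (tvar 10) (fbex (tvar 11)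
          (fand (memk 2 (Jt tzero (tvar 3) (tvar 8) (tvar 1)))
           (fand (memk 2 (Jt tzero (tvar 2) (tvar 8) (tvar 0)))
            (feq (tvar 9) (tmult (tvar 1) (tvar 0))))))))
   (fand (flt (num 3) (tvar 3)) (feq (tvar 7) tzero))))))).

Lemma JTF_sem : forall xi rho, sat xi rho JTF <->
  JT_b (memP (rho 3) (rho 4) (rho 5)) (rho 5) (rho 0) (rho 1) (rho 2).
Proof. intros; reflexivity. Qed.

(* ctx: 0=f 1=s 2=b 3=c 4=d 5=m ; in cases: u'=0,u=1,r=2,tag=3,g=4,f=5,s=6,b=7,c=8,d=9,m=10 *)
Definition JFF : formula :=
 forr (fand (feq (tvar 0) tzero) (feq (tvar 2) tzero))
 (prefix5
  (forr (fand (feq (tvar 3) tzero) (fbex (tvar 10) (fbex (tvar 11)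
          (fand (memk 2 (Jt tzero (tvar 3) (tvar 8) (tvar 1)))
           (fand (memk 2 (Jt tzero (tvar 2) (tvar 8) (tvar 0)))
            (forr (fand (feq (tvar 9) (num 1)) (feq (tvar 1) (tvar 0)))
                  (fand (feq (tvar 9) tzero) (forr (flt (tvar 1) (tvar 0)) (flt (tvar 0) (tvar 1))))))))))
  (forr (fand (feq (tvar 3) (num 1)) (fbex (tvar 10) (fbex (tvar 11)
          (fand (memk 2 (Jt tzero (tvar 3) (tvar 8) (tvar 1)))
           (fand (memk 2 (Jt tzero (tvar 2) (tvar 8) (tvar 0)))
            (forr (fand (feq (tvar 9) (num 1)) (flt (tvar 1) (tvar 0)))
                  (fand (feq (tvar 9) tzero) (flt (tvar 0) (tsucc (tvar 1))))))))))
  (forr (fand (feq (tvar 3) (num 2))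
          (forr (fand (feq (tvar 7) (num 1)) (memk 0 (Jt (num 1) (tvar 2) (tvar 6) tzero)))
                (fand (feq (tvar 7) tzero) (memk 0 (Jt (num 1) (tvar 2) (tvar 6) (num 1))))))
  (forr (fand (feq (tvar 3) (num 3))
          (forr (fand (feq (tvar 7) (num 1)) (fand (memk 0 (Jt (num 1) (tvar 1) (tvar 6) (num 1)))
                                                  (memk 0 (Jt (num 1) (tvar 0) (tvar 6) (num 1)))))
                (fand (feq (tvar 7) tzero) (forr (memk 0 (Jt (num 1) (tvar 1) (tvar 6) tzero))
                                                  (memk 0 (Jt (num 1) (tvar 0) (tvar 6) tzero))))))
  (forr (fand (feq (tvar 3) (num 4))
          (forr (fand (feq (tvar 7) (num 1)) (forr (memk 0 (Jt (num 1) (tvar 1) (tvar 6) (num 1)))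
                                                  (memk 0 (Jt (num 1) (tvar 0) (tvar 6) (num 1)))))
                (fand (feq (tvar 7) tzero) (fand (memk 0 (Jt (num 1) (tvar 1) (tvar 6) tzero))
                                                  (memk 0 (Jt (num 1) (tvar 0) (tvar 6) tzero))))))
  (forr (fand (feq (tvar 3) (num 5)) (fbex (tvar 10)
          (fand (memk 1 (Jt tzero (tvar 2) (tvar 7) (tvar 0)))
           (forr (fand (feq (tvar 8) (num 1))
                   (fbex (tvar 0) (memk 2 (Jt (num 1) (tvar 2) (tsucc (Pt (tvar 0) (tvar 8))) (num 1)))))
                 (fand (feq (tvar 8) tzero)
                   (fball (tvar 0) (memk 2 (Jt (num 1) (tvar 2) (tsucc (Pt (tvar 0) (tvar 8))) tzero))))))))
  (forr (fand (feq (tvar 3) (num 6)) (fbex (tvar 10)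
          (fand (memk 1 (Jt tzero (tvar 2) (tvar 7) (tvar 0)))
           (forr (fand (feq (tvar 8) (num 1))
                   (fball (tvar 0) (memk 2 (Jt (num 1) (tvar 2) (tsucc (Pt (tvar 0) (tvar 8))) (num 1)))))
                 (fand (feq (tvar 8) tzero)
                   (fbex (tvar 0) (memk 2 (Jt (num 1) (tvar 2) (tsucc (Pt (tvar 0) (tvar 8))) tzero))))))))
   (fand (flt (num 6) (tvar 3)) (feq (tvar 7) tzero)))))))))).

Lemma JFF_sem : forall xi rho, sat xi rho JFF <->
  JF_b (memP (rho 3) (rho 4) (rho 5)) (rho 5) (rho 0) (rho 1) (rho 2).
Proof. intros; reflexivity. Qed.

(* ctx: 0=j 1=c 2=d 3=m ; inner: v=0,s=1,x=2,k=3,j=4,c=5,d=6,m=7 *)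
Definition JustF : formula :=
 fbex (tvar 3) (fbex (tvar 4) (fbex (tvar 5) (fbex (tvar 6)
   (fand (feq (tvar 4) (Jt (tvar 3) (tvar 2) (tvar 1) (tvar 0)))
    (forr (fand (feq (tvar 3) tzero) (inst [tvar 2; tvar 1; tvar 0; tvar 5; tvar 6; tvar 7] JTF))
     (forr (fand (feq (tvar 3) (num 1)) (inst [tvar 2; tvar 1; tvar 0; tvar 5; tvar 6; tvar 7] JFF))
           (fand (feq (tvar 3) (num 2)) (inst [tvar 2; tvar 1; tvar 0; tvar 5; tvar 6; tvar 7] JVF)))))))).

Lemma JustF_sem : forall xi rho, sat xi rho JustF <->
  Just_b (memP (rho 1) (rho 2) (rho 3)) (rho 3) (rho 0).
Proof. intros; reflexivity. Qed.

Definition closedF : formula :=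
  fball (tvar 2) (forr (fnot (mem (tvar 1) (tvar 2) (tvar 3) (tvar 0)))
                       (inst [tvar 0; tvar 1; tvar 2; tvar 3] JustF)).

Definition closedP (c d m : nat) : Prop :=
  forall j, j < m -> ~ memP c d m j \/ Just_b (memP c d m) m j.

Lemma closedF_sem : forall xi rho, sat xi rho closedF <-> closedP (rho 0) (rho 1) (rho 2).
Proof. intros; reflexivity. Qed.

(* ctx: 0=s 1=f *)
Definition TF (b : nat) : formula :=
  fex (fbex (tvar 0) (fbex (tvar 1) (fbex (tvar 2)
    (fand (inst [tvar 2; tvar 1; tvar 0] closedF)
          (mem (tvar 2) (tvar 1) (tvar 0) (Jt (num 1) (tvar 5) (tvar 4) (num b))))))).

Lemma TF_sem1 : forall xi rho, sat xi rho (TF 1) <->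
  exists w, exists c, c < w /\ exists d, d < w /\ exists m, m < w /\
   (closedP c d m /\ memP c d m (J 1 (rho 1) (rho 0) 1)).
Proof. intros; reflexivity. Qed.

Lemma TF_sem0 : forall xi rho, sat xi rho (TF 0) <->
  exists w, exists c, c < w /\ exists d, d < w /\ exists m, m < w /\
   (closedP c d m /\ memP c d m (J 1 (rho 1) (rho 0) 0)).
Proof. intros; reflexivity. Qed.

Lemma TF_sem : forall xi rho b, b <= 1 -> (sat xi rho (TF b) <->
  exists w, exists c, c < w /\ exists d, d < w /\ exists m, m < w /\
   (closedP c d m /\ memP c d m (J 1 (rho 1) (rho 0) b))).
Proof. intros xi rho [|[|b]] Hb; [apply TF_sem0|apply TF_sem1|lia]. Qed.

Lemma TF_Sigma1 : forall b, is_Sigma 1 (TF b).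
Proof. intros; simpl. repeat split; apply bounded_subst; simpl; repeat split; apply bounded_subst; simpl; tauto. Qed.

Lemma Pg_le : forall g x y, g + g = P x y -> x <= g /\ y <= g.
Proof. intros. apply uncp_le. apply uncp_P. auto. Qed.

Lemma Just_b_to : forall M m j, Just_b M m j -> Just M j.
Proof.
  intros M m j (k & _ & x & _ & s & _ & v & _ & E & H). exists k, x, s, v. split; auto.
  destruct H as [[Hk H]|[[Hk H]|[Hk H]]]; [left|right;left|right;right]; split; auto.
  - destruct H as [H|(g & _ & tag & _ & r & _ & u & _ & u' & _ & E1 & E2 & E3 & H)]; [left; auto|right].
    exists g, tag, r, u, u'; repeat (split; [assumption|]).
    destruct H as [H|[H|[H|[H|H]]]].
    + left; auto.
    + right; left. destruct H as (? & w & _ & ?). split; eauto.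
    + do 2 right; left. destruct H as (? & w1 & _ & w2 & _ & ?). split; eauto.
    + do 3 right; left. destruct H as (? & w1 & _ & w2 & _ & ?). split; eauto.
    + do 4 right; auto.
  - destruct H as [H|(g & _ & tag & _ & r & _ & u & _ & u' & _ & E1 & E2 & E3 & H)]; [left; auto|right].
    exists g, tag, r, u, u'; repeat (split; [assumption|]).
    destruct H as [H|[H|[H|[H|[H|[H|[H|H]]]]]]].
    + left. destruct H as (? & w1 & _ & w2 & _ & ?). split; eauto.
    + right; left. destruct H as (? & w1 & _ & w2 & _ & ?). split; eauto.
    + do 2 right; left. tauto.
    + do 3 right; left. tauto.
    + do 4 right; left. tauto.
    + do 5 right; left. destruct H as (? & w & _ & ?). split; eauto.
    + do 6 right; left. destruct H as (? & w & _ & ?). split; eauto.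
    + do 7 right. auto.
  - destruct H as [H|(a & _ & s' & _ & E1 & H)]; [left; auto|right].
    exists a, s'. split; auto. destruct H as [H|(i' & _ & H)]; [left; auto|right; eauto].
Qed.

Section ToB.
Variable M : nat -> Prop.
Variable m : nat.
Hypothesis HM : forall x, M x -> x < m.

Ltac wb H := let h := fresh in pose proof (HM _ H) as h;
  match type of H with M (J ?a ?b ?c ?d) => pose proof (J_ge a b c d) end.

Lemma Just_to_b : forall j, j < m -> Just M j -> Just_b M m j.
Proof.
  intros j Hj (k & x & s & v & E & H). pose proof (J_ge k x s v).
  exists k; split; [lia|]. exists x; split; [lia|]. exists s; split; [lia|]. exists v; split; [lia|].
  split; auto.
  destruct H as [[Hk H]|[[Hk H]|[Hk H]]]; [left|right;left|right;right]; split; auto.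
  - destruct H as [H|(g & tag & r & u & u' & E1 & E2 & E3 & H)]; [left; auto|right].
    pose proof (Pg_le _ _ _ E2). pose proof (Pg_le _ _ _ E3).
    exists g; split; [lia|]. exists tag; split; [lia|]. exists r; split; [lia|].
    exists u; split; [lia|]. exists u'; split; [lia|].
    repeat (split; [assumption|]).
    destruct H as [H|[H|[H|[H|H]]]].
    + left; auto.
    + right; left. destruct H as (? & w & Hm1 & ?). wb Hm1. split; auto. exists w; split; [lia|]; auto.
    + do 2 right; left. destruct H as (? & w1 & w2 & Hm1 & Hm2 & ?). wb Hm1. wb Hm2.
      split; auto. exists w1; split; [lia|]. exists w2; split; [lia|]; auto.
    + do 3 right; left. destruct H as (? & w1 & w2 & Hm1 & Hm2 & ?). wb Hm1. wb Hm2.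
      split; auto. exists w1; split; [lia|]. exists w2; split; [lia|]; auto.
    + do 4 right; auto.
  - destruct H as [H|(g & tag & r & u & u' & E1 & E2 & E3 & H)]; [left; auto|right].
    pose proof (Pg_le _ _ _ E2). pose proof (Pg_le _ _ _ E3).
    exists g; split; [lia|]. exists tag; split; [lia|]. exists r; split; [lia|].
    exists u; split; [lia|]. exists u'; split; [lia|].
    repeat (split; [assumption|]).
    destruct H as [H|[H|[H|[H|[H|[H|[H|H]]]]]]].
    + left. destruct H as (? & w1 & w2 & Hm1 & Hm2 & ?). wb Hm1. wb Hm2.
      split; auto. exists w1; split; [lia|]. exists w2; split; [lia|]; auto.
    + right; left. destruct H as (? & w1 & w2 & Hm1 & Hm2 & ?). wb Hm1. wb Hm2.
      split; auto. exists w1; split; [lia|]. exists w2; split; [lia|]; auto.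
    + do 2 right; left. tauto.
    + do 3 right; left. tauto.
    + do 4 right; left. tauto.
    + do 5 right; left. destruct H as (? & w & Hm1 & ?). wb Hm1. split; auto. exists w; split; [lia|]; auto.
    + do 6 right; left. destruct H as (? & w & Hm1 & ?). wb Hm1. split; auto. exists w; split; [lia|]; auto.
    + do 7 right. auto.
  - destruct H as [H|(a & s' & E1 & H)]; [left; auto|right].
    pose proof (P_ge a s').
    exists a; split; [lia|]. exists s'; split; [lia|]. split; auto.
    destruct H as [H|(i' & E2 & H)]; [left; auto|right]. exists i'; split; [lia|]; auto.
Qed.
End ToB.

Lemma memP_iff : forall c d m x, memP c d m x <-> (x < m /\ exists q, q * S (S x * d) = c).
Proof.
  intros; unfold memP; split; intros [H1 (q & H2)]; split; auto; exists q; intuition; nia.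
Qed.

Lemma TF_correct : forall xi rho l, rho 0 = lcode l ->
  (sat xi rho (TF 1) <-> sat no_reals (lenv l) (Df (rho 1))) /\
  (sat xi rho (TF 0) <-> ~ sat no_reals (lenv l) (Df (rho 1))).
Proof.
  intros xi rho l Hl.
  assert (Hsound : forall b, sat xi rho (TF b) -> b <= 1 ->
     (b = 1 /\ sat no_reals (lenv l) (Df (rho 1))) \/ (b = 0 /\ ~ sat no_reals (lenv l) (Df (rho 1)))).
  { intros b Hs Hb. apply TF_sem in Hs; auto.
    destruct Hs as (w & c & _ & d & _ & m & _ & HC & Hm).
    apply (sound_F (memP c d m)); [|rewrite <- Hl; auto].
    intros j Hj. destruct (HC j (proj1 Hj)) as [?|Hb']; [contradiction|].
    eapply Just_b_to; eauto. }
  assert (Hcomp : exists b, sat xi rho (TF b) /\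
     ((b = 1 /\ sat no_reals (lenv l) (Df (rho 1))) \/ (b = 0 /\ ~ sat no_reals (lenv l) (Df (rho 1))))).
  { destruct (comp_F (rho 1) l) as (L & b & HL & Hin & Hspec).
    destruct (finset_code L) as (c & d & m & Hcode).
    assert (Hmem : forall x, memP c d m x <-> In x L).
    { intros x. rewrite memP_iff. apply Hcode. }
    exists b. split; auto.
    apply TF_sem; [destruct Hspec as [[-> _]|[-> _]]; lia|].
    exists (S (c + d + m)), c. split; [lia|]. exists d; split; [lia|]. exists m; split; [lia|].
    split.
    - intros j Hj. destruct (Classical_Prop.classic (memP c d m j)) as [Hj'|Hj']; [right|left; auto].
      apply Just_to_b; auto. { intros x Hx; apply Hx. }
      apply Hmem in Hj'. apply HL in Hj'. eapply Just_mono; [|exact Hj']. intros x Hx; apply Hmem; auto.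
    - apply Hmem. rewrite Hl. auto. }
  destruct Hcomp as (b & Hs & Hspec).
  split; split; intros H.
  - destruct (Hsound 1 H ltac:(lia)) as [[_ ?]|[? _]]; [auto|discriminate].
  - destruct Hspec as [[-> _]|[-> ?]]; [auto|contradiction].
  - destruct (Hsound 0 H ltac:(lia)) as [[? _]|[_ ?]]; [discriminate|auto].
  - destruct Hspec as [[-> ?]|[-> _]]; [contradiction|auto].
Qed.

Definition Pred := (nat -> nat -> bool) -> (nat -> nat) -> Prop.

Definition Bd (A : Pred) := exists p, bounded p /\ forall xi rho, A xi rho <-> sat xi rho p.
Definition S1 (A : Pred) := exists p, is_Sigma 1 p /\ forall xi rho, A xi rho <-> sat xi rho p.
Definition P1 (A : Pred) := exists p, is_Pi 1 p /\ forall xi rho, A xi rho <-> sat xi rho p.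

Lemma S1_ext : forall A B : Pred, (forall xi rho, B xi rho <-> A xi rho) -> S1 A -> S1 B.
Proof. intros A B H (p & Hp & Hs). exists p; split; auto. intros; rewrite H; auto. Qed.
Lemma P1_ext : forall A B : Pred, (forall xi rho, B xi rho <-> A xi rho) -> P1 A -> P1 B.
Proof. intros A B H (p & Hp & Hs). exists p; split; auto. intros; rewrite H; auto. Qed.
Lemma Bd_ext : forall A B : Pred, (forall xi rho, B xi rho <-> A xi rho) -> Bd A -> Bd B.
Proof. intros A B H (p & Hp & Hs). exists p; split; auto. intros; rewrite H; auto. Qed.

Lemma Bd_sat : forall p, bounded p -> Bd (fun xi rho => sat xi rho p).
Proof. intros p Hp. exists p; split; auto; tauto. Qed.

Definition shift1 : nat -> term := fun i => tvar (S i).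

Lemma sat_shift1 : forall xi rho y p, sat xi (scons y rho) (fsubst shift1 p) <-> sat xi rho p.
Proof. intros. rewrite sat_subst. apply sat_ext. intros; reflexivity. Qed.

Lemma Bd_S1 : forall A, Bd A -> S1 A.
Proof.
  intros A (p & Hp & Hs). exists (fex (fsubst shift1 p)). split; [simpl; apply bounded_subst; auto|].
  intros xi rho. rewrite Hs. simpl. split; [intros H; exists 0; apply sat_shift1; auto|].
  intros [y H]. apply sat_shift1 in H; auto.
Qed.

Lemma Bd_neg : forall A, Bd A -> Bd (fun xi rho => ~ A xi rho).
Proof. intros A (p & Hp & Hs). exists (fnot p); split; auto. intros; simpl; rewrite Hs; tauto. Qed.

Lemma S1_neg : forall A, S1 A -> P1 (fun xi rho => ~ A xi rho).
Proof.
  intros A (p & Hp & Hs). destruct p; try contradiction.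
  exists (fall (fnot p)). split; [simpl in *; auto|]. intros xi rho; rewrite Hs; simpl.
  split; [intros H a Ha; apply H; eauto|intros H [a Ha]; apply (H a); auto].
Qed.

Lemma P1_neg : forall A, P1 A -> S1 (fun xi rho => ~ A xi rho).
Proof.
  intros A (p & Hp & Hs). destruct p; try contradiction.
  exists (fex (fnot p)). split; [simpl in *; auto|]. intros xi rho; rewrite Hs; simpl.
  split; [intros H; apply NNPP; intros N; apply H; intros a; apply NNPP; intros N'; apply N; eauto|].
  intros [a Ha] H; apply Ha; auto.
Qed.

Lemma S1_subst : forall A (s : nat -> term), S1 A -> S1 (fun xi rho => A xi (fun i => teval rho (s i))).
Proof.
  intros A s (p & Hp & Hs). exists (fsubst s p). split; [apply SP_subst; auto|].
  intros; rewrite sat_subst; auto.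
Qed.

Lemma S1_of_2ex : forall B, bounded B ->
  S1 (fun xi rho => exists y z, sat xi (scons z (scons y rho)) B).
Proof.
  intros B HB.
  set (sg := fun i => match i with 0 => tvar 0 | 1 => tvar 1 | S (S i) => tvar (S (S (S i))) end).
  exists (fex (fbex (tsucc (tvar 0)) (fbex (tsucc (tvar 1)) (fsubst sg B)))).
  split; [simpl; apply bounded_subst; auto|].
  intros xi rho. simpl. split.
  - intros (y & z & H). exists (y + z). exists y; split; [lia|]. exists z; split; [lia|].
    rewrite sat_subst. eapply sat_ext; [|exact H]. intros [|[|i]]; reflexivity.
  - intros (w & y & _ & z & _ & H). exists y, z. rewrite sat_subst in H.
    eapply sat_ext; [|exact H]. intros [|[|i]]; reflexivity.
Qed.

Lemma S1_nf : forall A, S1 A -> exists B, bounded B /\ forall xi rho, A xi rho <-> exists z, sat xi (scons z rho) B.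
Proof. intros A (p & Hp & Hs). destruct p; try contradiction. exists p; split; auto. Qed.

Lemma S1_ex : forall A, S1 A -> S1 (fun xi rho => exists y, A xi (scons y rho)).
Proof.
  intros A HA. destruct (S1_nf A HA) as (B & HB & Hs).
  eapply S1_ext; [|apply (S1_of_2ex B HB)]. intros; simpl. setoid_rewrite Hs. reflexivity.
Qed.

Lemma S1_and : forall A1 A2, S1 A1 -> S1 A2 -> S1 (fun xi rho => A1 xi rho /\ A2 xi rho).
Proof.
  intros A1 A2 H1 H2. destruct (S1_nf _ H1) as (B1 & HB1 & Hs1). destruct (S1_nf _ H2) as (B2 & HB2 & Hs2).
  set (s1 := fun i => match i with 0 => tvar 1 | S i => tvar (S (S i)) end).
  set (s2 := fun i => match i with 0 => tvar 0 | S i => tvar (S (S i)) end).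
  eapply S1_ext; [|apply (S1_of_2ex (fand (fsubst s1 B1) (fsubst s2 B2)))].
  - intros xi rho. rewrite Hs1, Hs2. simpl. setoid_rewrite sat_subst. split.
    + intros [[y Hy] [z Hz]]. exists y, z. split; (eapply sat_ext; [|eassumption]); intros [|i]; reflexivity.
    + intros (y & z & Hy & Hz). split; [exists y|exists z]; (eapply sat_ext; [|eassumption]); intros [|i]; reflexivity.
  - simpl; split; apply bounded_subst; auto.
Qed.

Lemma S1_or : forall A1 A2, S1 A1 -> S1 A2 -> S1 (fun xi rho => A1 xi rho \/ A2 xi rho).
Proof.
  intros A1 A2 H1 H2. destruct (S1_nf _ H1) as (B1 & HB1 & Hs1). destruct (S1_nf _ H2) as (B2 & HB2 & Hs2).
  exists (fex (forr B1 B2)). split; [simpl; auto|].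
  intros xi rho. rewrite Hs1, Hs2. simpl. split.
  - intros [[z H]|[z H]]; exists z; auto.
  - intros [z [H|H]]; [left|right]; exists z; auto.
Qed.

Lemma S1_bex : forall A t, S1 A ->
  S1 (fun xi rho => exists x, x < teval rho t /\ A xi (scons x rho)).
Proof.
  intros A t HA. destruct (S1_nf _ HA) as (B & HB & Hs).
  set (sg := fun i => match i with 0 => tvar 1 | 1 => tvar 0 | S (S i) => tvar (S (S i)) end).
  exists (fex (fbex (tlift t) (fsubst sg B))). split; [simpl; apply bounded_subst; auto|].
  intros xi rho. simpl. setoid_rewrite Hs. setoid_rewrite sat_subst. setoid_rewrite teval_lift. split.
  - intros (x & Hx & z & H). exists z, x. split; auto. eapply sat_ext; [|exact H]. intros [|[|i]]; reflexivity.
  - intros (z & x & Hx & H). exists x. split; auto. exists z. eapply sat_ext; [|exact H]. intros [|[|i]]; reflexivity.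
Qed.

Lemma P1_of_S1neg : forall A, S1 (fun xi rho => ~ A xi rho) -> P1 A.
Proof.
  intros A H. apply S1_neg in H. eapply P1_ext; [|exact H]. intros; simpl. split; [intros; apply NNPP; auto|tauto].
Qed.

Lemma Bd_P1 : forall A, Bd A -> P1 A.
Proof. intros A H. apply P1_of_S1neg. apply Bd_S1. apply Bd_neg; auto. Qed.

Lemma P1_and : forall A1 A2, P1 A1 -> P1 A2 -> P1 (fun xi rho => A1 xi rho /\ A2 xi rho).
Proof.
  intros A1 A2 H1 H2. apply P1_of_S1neg. apply P1_neg in H1. apply P1_neg in H2.
  eapply S1_ext; [|apply (S1_or _ _ H1 H2)]. intros; simpl; tauto.
Qed.

Lemma P1_or : forall A1 A2, P1 A1 -> P1 A2 -> P1 (fun xi rho => A1 xi rho \/ A2 xi rho).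
Proof.
  intros A1 A2 H1 H2. apply P1_of_S1neg. apply P1_neg in H1. apply P1_neg in H2.
  eapply S1_ext; [|apply (S1_and _ _ H1 H2)]. intros; simpl; tauto.
Qed.

Lemma P1_all : forall A, P1 A -> P1 (fun xi rho => forall y, A xi (scons y rho)).
Proof.
  intros A H. apply P1_of_S1neg. apply P1_neg in H. apply S1_ex in H.
  eapply S1_ext; [|exact H]. intros; simpl. split; [intros N; apply NNPP; intros N'; apply N; intros y; apply NNPP; eauto|].
  intros [y Hy] Ha; apply Hy; auto.
Qed.

Lemma P1_ball : forall A t, P1 A ->
  P1 (fun xi rho => forall x, x < teval rho t -> A xi (scons x rho)).
Proof.
  intros A t H. apply P1_of_S1neg. apply P1_neg in H. apply (S1_bex _ t) in H.
  eapply S1_ext; [|exact H]. intros; simpl. split.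
  - intros N; apply NNPP; intros N'; apply N; intros x Hx; apply NNPP; eauto.
  - intros (x & Hx & Hn) Ha; apply Hn; auto.
Qed.

Lemma P1_subst : forall A (s : nat -> term), P1 A -> P1 (fun xi rho => A xi (fun i => teval rho (s i))).
Proof.
  intros A s H. apply P1_of_S1neg. apply P1_neg in H. apply (S1_subst _ s) in H. exact H.
Qed.

Definition D1 (A : Pred) := S1 A /\ P1 A.

Lemma D1_ext : forall A B : Pred, (forall xi rho, B xi rho <-> A xi rho) -> D1 A -> D1 B.
Proof. intros A B H [H1 H2]; split; [eapply S1_ext|eapply P1_ext]; eauto. Qed.
Lemma D1_and : forall A1 A2, D1 A1 -> D1 A2 -> D1 (fun xi rho => A1 xi rho /\ A2 xi rho).
Proof. intros A1 A2 [? ?] [? ?]; split; [apply S1_and|apply P1_and]; auto. Qed.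
Lemma D1_or : forall A1 A2, D1 A1 -> D1 A2 -> D1 (fun xi rho => A1 xi rho \/ A2 xi rho).
Proof. intros A1 A2 [? ?] [? ?]; split; [apply S1_or|apply P1_or]; auto. Qed.
Lemma D1_Bd : forall A, Bd A -> D1 A.
Proof. intros; split; [apply Bd_S1|apply Bd_P1]; auto. Qed.
Lemma D1_neg : forall A, D1 A -> D1 (fun xi rho => ~ A xi rho).
Proof. intros A [H1 H2]; split; [apply P1_neg|apply S1_neg]; auto. Qed.
Lemma D1_subst : forall A (s : nat -> term), D1 A -> D1 (fun xi rho => A xi (fun i => teval rho (s i))).
Proof. intros A s [H1 H2]; split; [apply S1_subst|apply P1_subst]; auto. Qed.
Lemma Bd_bex : forall A t, Bd A -> Bd (fun xi rho => exists x, x < teval rho t /\ A xi (scons x rho)).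
Proof.
  intros A t (p & Hp & Hs). exists (fbex t p). split; auto. intros; simpl. setoid_rewrite Hs. reflexivity.
Qed.

Lemma Bd_and : forall A1 A2, Bd A1 -> Bd A2 -> Bd (fun xi rho => A1 xi rho /\ A2 xi rho).
Proof. intros A1 A2 (p & Hp & Hs) (q & Hq & Hs'). exists (fand p q). split; [simpl; auto|]. intros; simpl; rewrite Hs, Hs'; tauto. Qed.
Lemma Bd_or : forall A1 A2, Bd A1 -> Bd A2 -> Bd (fun xi rho => A1 xi rho \/ A2 xi rho).
Proof. intros A1 A2 (p & Hp & Hs) (q & Hq & Hs'). exists (forr p q). split; [simpl; auto|]. intros; simpl; rewrite Hs, Hs'; tauto. Qed.
Lemma Bd_subst : forall A (s : nat -> term), Bd A -> Bd (fun xi rho => A xi (fun i => teval rho (s i))).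
Proof. intros A s (p & Hp & Hs). exists (fsubst s p). split; [apply bounded_subst; auto|]. intros; rewrite sat_subst; auto. Qed.

Lemma D1_bex_uniq : forall C A t, Bd C -> D1 A ->
  (forall xi rho x x', C xi (scons x rho) -> C xi (scons x' rho) -> x = x') ->
  D1 (fun xi rho => exists x, x < teval rho t /\ (C xi (scons x rho) /\ A xi (scons x rho))).
Proof.
  intros C A t HC [HA1 HA2] Hu. split.
  - apply (S1_bex (fun xi rho => C xi rho /\ A xi rho) t). apply S1_and; auto. apply Bd_S1; auto.
  - eapply P1_ext; [|apply P1_and; [apply Bd_P1; apply (Bd_bex C t HC)|
                                     apply (P1_ball (fun xi rho => ~ C xi rho \/ A xi rho) t); apply P1_or; [apply Bd_P1; apply Bd_neg; exact HC|exact HA2]]].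
    intros xi rho. simpl. split.
    + intros (x & Hx & Hc & Ha). split; [eauto|]. intros x' Hx'. destruct (classic (C xi (scons x' rho))) as [Hc'|Hc']; [right|left; auto].
      rewrite (Hu xi rho x' x Hc' Hc). auto.
    + intros [(x & Hx & Hc) H]. exists x; split; auto. split; auto. destruct (H x Hx); [contradiction|auto].
Qed.

Fixpoint QS (k : nat) (R : (nat -> nat) -> Prop) (rho : nat -> nat) : Prop :=
  match k with 0 => R rho | S k' => exists y, QP k' R (scons y rho) end
with QP (k : nat) (R : (nat -> nat) -> Prop) (rho : nat -> nat) : Prop :=
  match k with 0 => R rho | S k' => forall y, QS k' R (scons y rho) end.

Definition push (ys : list nat) (rho : nat -> nat) : nat -> nat := fold_right scons rho ys.

Lemma push_app : forall ys y rho, push (ys ++ y :: nil) rho = push ys (scons y rho).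
Proof. intros; unfold push; rewrite fold_right_app; reflexivity. Qed.

Lemma push_lt : forall ys rho i, i < length ys -> push ys rho i = nth i ys 0.
Proof. induction ys; intros rho i H; simpl in *; [lia|]. destruct i; simpl; auto. apply IHys; lia. Qed.

Lemma push_ge : forall ys rho i, push ys rho (length ys + i) = rho i.
Proof. induction ys; intros rho i; simpl; auto. Qed.

Lemma Q_transport : forall k R1 R2 rho1 rho2,
  (forall ys, length ys = k -> (R1 (push ys rho1) <-> R2 (push ys rho2))) ->
  (QS k R1 rho1 <-> QS k R2 rho2) /\ (QP k R1 rho1 <-> QP k R2 rho2).
Proof.
  induction k; intros R1 R2 rho1 rho2 H; simpl.
  - specialize (H nil eq_refl). simpl in H. tauto.
  - assert (Hy : forall y, (QS k R1 (scons y rho1) <-> QS k R2 (scons y rho2)) /\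
                           (QP k R1 (scons y rho1) <-> QP k R2 (scons y rho2))).
    { intros y. apply IHk. intros ys Hl. rewrite <- !push_app. apply H.
      rewrite length_app; simpl; lia. }
    split; split.
    + intros [y Hq]; exists y; apply Hy; auto.
    + intros [y Hq]; exists y; apply Hy; auto.
    + intros Hq y; apply Hy; auto.
    + intros Hq y; apply Hy; auto.
Qed.

Lemma Q_const : forall k (C : Prop) rho, (QS k (fun _ => C) rho <-> C) /\ (QP k (fun _ => C) rho <-> C).
Proof.
  induction k; intros C rho; simpl; [tauto|].
  split; split.
  - intros [y H]; destruct (IHk C (scons y rho)) as [_ [H1 _]]; auto.
  - intros H; exists 0; destruct (IHk C (scons 0 rho)) as [_ [_ H1]]; auto.
  - intros H; destruct (IHk C (scons 0 rho)) as [[H1 _] _]; auto.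
  - intros H y; destruct (IHk C (scons y rho)) as [[_ H1] _]; auto.
Qed.

Lemma prefix_lemma : forall (B : Pred), D1 B -> forall k, 1 <= k ->
  (exists p, is_Sigma k p /\ forall xi rho, QS k (B xi) rho <-> sat xi rho p) /\
  (exists p, is_Pi k p /\ forall xi rho, QP k (B xi) rho <-> sat xi rho p).
Proof.
  intros B [HS HP] k Hk. induction k as [|k IH]; [lia|].
  destruct k as [|k].
  - split.
    + destruct (S1_ex _ HS) as (p & Hp & Hs). exists p; split; auto.
    + destruct (P1_all _ HP) as (p & Hp & Hs). exists p; split; auto.
  - destruct (IH ltac:(lia)) as [(p & Hp & Hs) (q & Hq & Hq')]. split.
    + exists (fex q). split; [exact Hq|]. intros xi rho. simpl. setoid_rewrite Hq'. reflexivity.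
    + exists (fall p). split; [exact Hp|]. intros xi rho. simpl. setoid_rewrite Hs. reflexivity.
Qed.

Fixpoint SPf (k : nat) (t : formula) : formula :=
  match k with 0 => t | S k' => fex (PPf k' t) end
with PPf (k : nat) (t : formula) : formula :=
  match k with 0 => t | S k' => fall (SPf k' t) end.

Lemma Pi_shape : forall n, (forall q, is_Pi n q -> exists t, bounded t /\ q = PPf n t) /\
                          (forall q, is_Sigma n q -> exists t, bounded t /\ q = SPf n t).
Proof.
  induction n; split; intros q Hq; simpl in *.
  - exists q; auto.
  - exists q; auto.
  - destruct q; try contradiction. destruct (proj2 IHn q Hq) as (t & Ht & ->). exists t; auto.
  - destruct q; try contradiction. destruct (proj1 IHn q Hq) as (t & Ht & ->). exists t; auto.
Qed.

Lemma neg_prefix : forall n t xi rho,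
  (~ sat xi rho (PPf n t) <-> QS n (fun r => ~ sat xi r t) rho) /\
  (~ sat xi rho (SPf n t) <-> QP n (fun r => ~ sat xi r t) rho).
Proof.
  induction n; intros t xi rho; simpl; [tauto|]. split.
  - split.
    + intros H. apply NNPP; intros N. apply H. intros a. apply NNPP; intros N'. apply N.
      exists a. apply IHn; auto.
    + intros [a Ha] H. apply (proj2 (IHn t xi (scons a rho))) in Ha. apply Ha; auto.
  - split.
    + intros H a. apply IHn. intros Hs. apply H; eauto.
    + intros H [a Ha]. specialize (H a). apply (proj1 (IHn t xi (scons a rho))) in H. auto.
Qed.

Definition ltm (ts : list term) : term := fold_right (fun t acc => tsucc (Pt t acc)) tzero ts.

Lemma teval_ltm : forall rho ts, teval rho (ltm ts) = lcode (map (teval rho) ts).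
Proof. induction ts; simpl; auto. rewrite IHts. reflexivity. Qed.

Definition DP (l : list nat) (x : nat) : Prop :=
  exists f, x = f + f /\ ~ sat no_reals (lenv l) (Df f).

Lemma TF_S1 : forall b, S1 (fun xi rho => sat xi rho (TF b)).
Proof. intros b. exists (TF b). split; [apply TF_Sigma1|tauto]. Qed.

Lemma DD_D1 : forall (ts : list term) (xt : term),
  D1 (fun xi rho => DP (map (teval rho) ts) (teval rho xt)).
Proof.
  intros ts xt.
  set (sg := fun i => match i with 0 => ltm (map tlift ts) | 1 => tvar 0 | _ => tzero end).
  set (A := fun xi r => sat xi (fun i => teval r (sg i)) (TF 0)).
  set (C := fun (xi : nat -> nat -> bool) r => teval r (tlift xt) = r 0 + r 0).
  assert (HA : D1 A).
  { split.
    - apply (S1_subst (fun xi rho => sat xi rho (TF 0)) sg). apply TF_S1.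
    - eapply P1_ext; [|apply S1_neg; apply (S1_subst (fun xi rho => sat xi rho (TF 1)) sg); apply TF_S1].
      intros xi r. unfold A.
      assert (Hl : teval r (sg 0) = lcode (map (teval r) (map tlift ts))) by (simpl; apply teval_ltm).
      destruct (TF_correct xi (fun i => teval _ (sg i)) _ Hl) as [H1 H0]. rewrite H0, H1. tauto. }
  assert (HC : Bd C).
  { exists (feq (tlift xt) (tplus (tvar 0) (tvar 0))). split; [simpl; auto|]. intros; simpl; tauto. }
  pose proof (D1_bex_uniq C A (tsucc xt) HC HA) as HD.
  eapply D1_ext; [|apply HD; unfold C; intros xi rho x x' H1 H2; simpl in H1, H2; rewrite teval_lift in H1, H2; lia].
  intros xi rho. unfold C, A, DP. simpl. setoid_rewrite teval_lift.
  assert (Hm : forall f, map (teval (scons f rho)) (map tlift ts) = map (teval rho) ts).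
  { intros f. rewrite map_map. apply map_ext. intros; apply teval_lift. }
  split.
  - intros (f & Hf & Hn). exists f. split; [lia|]. split; auto.
    assert (Hl : teval (scons f rho) (sg 0) = lcode (map (teval rho) ts)) by (simpl; rewrite teval_ltm, Hm; auto).
    destruct (TF_correct xi (fun i => teval _ (sg i)) _ Hl) as [_ H0]. apply H0. exact Hn.
  - intros (f & _ & Hf & Hs). exists f. split; auto.
    assert (Hl : teval (scons f rho) (sg 0) = lcode (map (teval rho) ts)) by (simpl; rewrite teval_ltm, Hm; auto).
    destruct (TF_correct xi (fun i => teval _ (sg i)) _ Hl) as [_ H0]. apply H0 in Hs. exact Hs.
Qed.

Definition vars (k : nat) : list term := map tvar (seq 0 k).

Lemma map_vars : forall rho k, map (teval rho) (vars k) = map rho (seq 0 k).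
Proof. intros; unfold vars; rewrite map_map; reflexivity. Qed.

Lemma push_map : forall ys rho, map (push ys rho) (seq 0 (length ys)) = ys.
Proof.
  induction ys; intros rho; simpl; auto. f_equal.
  rewrite <- seq_shift, map_map. simpl. apply IHys.
Qed.

Lemma push_n : forall ys rho, push ys rho (length ys) = rho 0.
Proof. intros. rewrite <- (Nat.add_0_r (length ys)). apply push_ge. Qed.
Lemma push_Sn : forall ys rho, push ys rho (S (length ys)) = rho 1.
Proof. intros. rewrite <- Nat.add_1_r. apply push_ge. Qed.

Lemma Q_some : forall k R rho, (QS k R rho -> exists ys, length ys = k /\ R (push ys rho)) /\
                               (QP k R rho -> exists ys, length ys = k /\ R (push ys rho)).
Proof.
  induction k; intros R rho; simpl.
  - split; intros H; exists nil; auto.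
  - split.
    + intros [y H]. destruct (proj2 (IHk R (scons y rho)) H) as (ys & Hl & Hr).
      exists (ys ++ [y]). rewrite push_app, length_app; simpl; split; auto; lia.
    + intros H. destruct (proj1 (IHk R (scons 0 rho)) (H 0)) as (ys & Hl & Hr).
      exists (ys ++ [0]). rewrite push_app, length_app; simpl; split; auto; lia.
Qed.

Section NatPart.
Variable n : nat.
Hypothesis Hn : 1 <= n.

Definition Dbase (r : nat -> nat) : Prop := DP (map r (seq 0 n) ++ [r n]) (r n).
Definition Dnat (a : nat) : Prop := QS n Dbase (scons a no_nums).

Definition EB : Pred := fun xi r =>
  r n = r (S n) \/ (r (S n) = S (r n) /\ DP (map r (seq 0 n) ++ [r n]) (r n)) \/
  (r n = S (r (S n)) /\ DP (map r (seq 0 n) ++ [r (S n)]) (r (S n))).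

Lemma EB_D1 : D1 EB.
Proof.
  apply D1_or; [|apply D1_or; apply D1_and].
  - apply D1_Bd. exists (feq (tvar n) (tvar (S n))). split; simpl; tauto.
  - apply D1_Bd. exists (feq (tvar (S n)) (tsucc (tvar n))). split; simpl; tauto.
  - eapply D1_ext; [|apply (DD_D1 (vars n ++ [tvar n]) (tvar n))].
    intros; simpl. rewrite map_app, map_vars. reflexivity.
  - apply D1_Bd. exists (feq (tvar n) (tsucc (tvar (S n)))). split; simpl; tauto.
  - eapply D1_ext; [|apply (DD_D1 (vars n ++ [tvar (S n)]) (tvar (S n)))].
    intros; simpl. rewrite map_app, map_vars. reflexivity.
Qed.

Definition Enat (a b : nat) : Prop := QS n (EB no_reals) (scons a (scons b no_nums)).

Lemma Dnat_even : forall a, Dnat a -> exists f, a = f + f.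
Proof.
  intros a H. destruct (proj1 (Q_some n Dbase _) H) as (ys & Hl & Hd).
  unfold Dbase in Hd. rewrite <- Hl, push_n in Hd. destruct Hd as (f & Hf & _). eauto.
Qed.

Lemma Enat_sem : forall a b, Enat a b <-> a = b \/ (b = S a /\ Dnat a) \/ (a = S b /\ Dnat b).
Proof.
  intros a b. unfold Enat.
  destruct (Nat.eq_dec a b) as [<-|Hab].
  - split; [auto|intros _].
    assert (Ht : forall ys, length ys = n -> (EB no_reals (push ys (scons a (scons a no_nums))) <-> True)).
    { intros ys Hl. unfold EB. rewrite <- Hl, push_n, push_Sn. simpl. tauto. }
    apply (proj2 (proj1 (Q_transport n (EB no_reals) (fun _ => True) (scons a (scons a no_nums)) (scons a (scons a no_nums)) Ht))).
    apply Q_const; auto.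
  - destruct (Nat.eq_dec b (S a)) as [->|Hb].
    + assert (Ht : forall ys, length ys = n -> (EB no_reals (push ys (scons a (scons (S a) no_nums))) <-> Dbase (push ys (scons a no_nums)))).
      { intros ys Hl. unfold EB, Dbase. rewrite <- Hl, !push_n, push_Sn. simpl.
        rewrite !push_map. split; [intros [?|[[_ ?]|[? _]]]; auto; lia|auto]. }
      rewrite (proj1 (Q_transport n _ _ _ _ Ht)).
      unfold Dnat. split; [auto|]. intros [?|[[_ ?]|[? _]]]; auto; lia.
    + destruct (Nat.eq_dec a (S b)) as [->|Ha].
      * assert (Ht : forall ys, length ys = n -> (EB no_reals (push ys (scons (S b) (scons b no_nums))) <-> Dbase (push ys (scons b no_nums)))).
        { intros ys Hl. unfold EB, Dbase. rewrite <- Hl, !push_n, push_Sn. simpl.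
          rewrite !push_map. split; [intros [?|[[? _]|[_ ?]]]; auto; lia|auto]. }
        rewrite (proj1 (Q_transport n _ _ _ _ Ht)).
        unfold Dnat. split; [auto|]. intros [?|[[? _]|[_ ?]]]; auto; lia.
      * assert (Ht : forall ys, length ys = n -> (EB no_reals (push ys (scons a (scons b no_nums))) <-> (fun _ => False) (push ys (scons a (scons b no_nums))))).
        { intros ys Hl. unfold EB. rewrite <- Hl, push_n, push_Sn. simpl. split; [|tauto].
          intros [?|[[? _]|[? _]]]; lia. }
        rewrite (proj1 (Q_transport n _ _ _ _ Ht)).
        rewrite (proj1 (Q_const n False _)). split; [tauto|]. intros [?|[[? _]|[? _]]]; lia.
Qed.

Lemma Enat_equiv : equivalence nat Enat.
Proof.
  constructor.
  - intros a. apply Enat_sem. auto.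
  - intros a b c H1 H2. apply Enat_sem in H1, H2. apply Enat_sem.
    destruct H1 as [E1|[[E1 D1]|[E1 D1]]]; destruct H2 as [E2|[[E2 D2]|[E2 D2]]];
    try (subst; tauto);
    try (left; lia);
    try (destruct (Dnat_even _ D1) as [f1 ?]; destruct (Dnat_even _ D2) as [f2 ?]; lia).
  - intros a b H. apply Enat_sem in H. apply Enat_sem. destruct H as [?|[?|?]]; [left; auto|right; right; auto|right; left; auto].
Qed.

Lemma Enat_Sigma : Sigma0_nat n Enat.
Proof.
  destruct (proj1 (prefix_lemma EB EB_D1 n Hn)) as (p & Hp & Hs).
  exists p. split; auto. intros a b. unfold Enat. apply Hs.
Qed.

Lemma lenv_push : forall ys a i, lenv (ys ++ [a]) i = push ys (scons a no_nums) i.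
Proof.
  induction ys; intros b i; simpl.
  - destruct i as [|[|i]]; reflexivity.
  - destruct i; simpl; auto. apply IHys.
Qed.

Lemma Dnat_diag : forall t, bounded t ->
  (Dnat (encf t + encf t) <-> ~ sat no_reals (scons (encf t + encf t) no_nums) (PPf n t)).
Proof.
  intros t Ht. set (e := encf t + encf t).
  rewrite (proj1 (neg_prefix n t no_reals _)). unfold Dnat.
  assert (Hb : forall ys, length ys = n -> (Dbase (push ys (scons e no_nums)) <-> ~ sat no_reals (push ys (scons e no_nums)) t)).
  { intros ys Hl. unfold Dbase, DP. rewrite <- Hl, push_n, push_map. simpl.
    split.
    - intros (f & Hf & Hs). assert (f = encf t) by (unfold e in Hf; lia). subst f.
      rewrite Df_encf in Hs; auto. intros H; apply Hs. eapply sat_ext; [|exact H].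
      intros; apply lenv_push.
    - intros Hs. exists (encf t). split; [reflexivity|]. rewrite Df_encf; auto.
      intros H; apply Hs. eapply sat_ext; [|exact H]. intros; symmetry; apply lenv_push. }
  exact (proj1 (Q_transport n Dbase (fun r => ~ sat no_reals r t) _ _ Hb)).
Qed.

Lemma Enat_not_graphable : ~ graphable (Pi0_nat n) Enat.
Proof.
  intros (G & (p & Hp & HG) & Hsym & Hirr & HE).
  assert (Key : forall a, Dnat a <-> G a (S a)).
  { intros a. split.
    - intros Hd. assert (He : Enat a (S a)) by (apply Enat_sem; auto).
      apply HE in He. apply clos_rt_rt1n in He. remember (S a) as b eqn:Eb.
      destruct He as [|c z Hac Hc]; [lia|].
      assert (Ec : Enat a c) by (apply HE; apply rt_step; auto).
      apply Enat_sem in Ec. destruct Ec as [Ec|[[Ec _]|[Ec Dc]]].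
      + subst c. exfalso; eapply Hirr; eauto.
      + subst. auto.
      + destruct (Dnat_even _ Hd) as [f1 ?]. destruct (Dnat_even _ Dc) as [f2 ?]. lia.
    - intros Hg. assert (He : Enat a (S a)) by (apply HE; apply rt_step; auto).
      apply Enat_sem in He. destruct He as [?|[[_ ?]|[? _]]]; auto; lia. }
  set (sg := fun i => match i with 0 => tvar 0 | 1 => tsucc (tvar 0) | _ => tzero end).
  set (q := fsubst sg p).
  assert (Hq : is_Pi n q) by (apply SP_subst; auto).
  assert (Hd : forall a, Dnat a <-> sat no_reals (scons a no_nums) q).
  { intros a. rewrite Key, HG. unfold q. rewrite sat_subst. apply sat_ext. intros [|[|i]]; reflexivity. }
  destruct (proj1 (Pi_shape n) q Hq) as (t & Ht & Eq).
  pose proof (Dnat_diag t Ht) as Hdiag. rewrite Hd, Eq in Hdiag. tauto.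
Qed.

End NatPart.

Definition iffF (a b : formula) : formula := forr (fand a b) (fand (fnot a) (fnot b)).

Lemma Bd_beq : forall a : term, Bd (fun xi r => xi 0 (teval r a) = xi 1 (teval r a)).
Proof.
  intros a. exists (iffF (fmem 0 a) (fmem 1 a)). split; [simpl; tauto|].
  intros xi r; simpl. destruct (xi 0 (teval r a)), (xi 1 (teval r a)); intuition congruence.
Qed.

Definition Pk (xi : nat -> nat -> bool) (k i : nat) : Prop :=
  (xi 0 (S i) = true <-> i = k) /\ (xi 1 (S i) = true <-> i = k).

Lemma Bd_Pk : forall k i : term, Bd (fun xi r => Pk xi (teval r k) (teval r i)).
Proof.
  intros k i. exists (fand (iffF (fmem 0 (tsucc i)) (feq i k)) (iffF (fmem 1 (tsucc i)) (feq i k))).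
  split; [simpl; tauto|]. intros xi r; unfold Pk; simpl. tauto.
Qed.

Section Cantor.
Variable m : nat.

Definition BaseC : Pred := fun xi r =>
  (xi 0 0 = xi 1 0 /\ xi 0 (r m) = xi 1 (r m)) \/
  (xi 0 0 <> xi 1 0 /\
   exists k, k < S (r (S m)) /\
     ((exists v, v < S (r (S m)) /\ r (S m) + r (S m) = P k v) /\
      (exists v, v < S (r (S m)) /\ (r (S m) + r (S m) = P k v /\
          (Pk xi k (r m) /\ DP (map r (seq 0 (S m)) ++ [v; k]) k))))).

Lemma BaseC_D1 : D1 BaseC.
Proof.
  apply D1_or.
  - apply D1_Bd. apply Bd_and; [apply (Bd_beq tzero)|apply (Bd_beq (tvar m))].
  - apply D1_and; [apply D1_Bd; apply Bd_neg; apply (Bd_beq tzero)|].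
    set (Ck := fun (xi : nat -> nat -> bool) (r : nat -> nat) =>
           exists v, v < S (r (S (S m))) /\ r (S (S m)) + r (S (S m)) = P (r 0) v).
    set (Ak := fun (xi : nat -> nat -> bool) (r : nat -> nat) =>
           exists v, v < S (r (S (S m))) /\ (r (S (S m)) + r (S (S m)) = P (r 0) v /\
             (Pk xi (r 0) (r (S m)) /\ DP (map (fun i => r (S i)) (seq 0 (S m)) ++ [v; r 0]) (r 0)))).
    assert (HCk : Bd Ck).
    { eapply Bd_ext; [|apply (Bd_bex (fun xi r => r (S (S (S m))) + r (S (S (S m))) = P (r 1) (r 0)) (tsucc (tvar (S (S m)))))].
      - intros; unfold Ck; simpl; reflexivity.
      - exists (feq (tplus (tvar (S (S (S m)))) (tvar (S (S (S m))))) (Pt (tvar 1) (tvar 0))).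
        split; [simpl; auto|]. intros; simpl; reflexivity. }
    assert (HAk : D1 Ak).
    { set (ts := map (fun i => tvar (S (S i))) (seq 0 (S m)) ++ [tvar 0; tvar 1]).
      eapply D1_ext; [|apply (D1_bex_uniq (fun xi r => r (S (S (S m))) + r (S (S (S m))) = P (r 1) (r 0))
                          (fun xi r => Pk xi (r 1) (r (S (S m))) /\ DP (map (teval r) ts) (r 1))
                          (tsucc (tvar (S (S m)))))].
      - intros xi r. unfold Ak, ts. cbn [teval scons].
        assert (Em : forall v, map (teval (scons v r)) (map (fun i => tvar (S (S i))) (seq 0 (S m))) =
                               map (fun i => r (S i)) (seq 0 (S m))).
        { intros v. rewrite map_map. reflexivity. }
        setoid_rewrite map_app. setoid_rewrite Em. cbn [map teval scons]. reflexivity.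
      - exists (feq (tplus (tvar (S (S (S m)))) (tvar (S (S (S m))))) (Pt (tvar 1) (tvar 0))).
        split; [simpl; auto|]. intros; simpl; reflexivity.
      - apply D1_and; [apply (D1_Bd _ (Bd_Pk (tvar 1) (tvar (S (S m)))))|].
        apply (DD_D1 ts (tvar 1)).
      - intros xi r x x' H1 H2. simpl in H1, H2. rewrite H1 in H2. apply P_inj in H2. tauto. }
    eapply D1_ext; [|apply (D1_bex_uniq Ck Ak (tsucc (tvar (S m))) HCk HAk)].
    + intros xi r. unfold Ck, Ak. cbn [teval scons]. reflexivity.
    + intros xi r x x' (v & _ & H1) (v' & _ & H2). simpl in H1, H2. rewrite H1 in H2.
      apply P_inj in H2. tauto.
Qed.

End Cantor.

Lemma Q_and_const : forall k (C : Prop) X rho,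
  (QS k (fun r => C /\ X r) rho <-> C /\ QS k X rho) /\
  (QP k (fun r => C /\ X r) rho <-> C /\ QP k X rho).
Proof.
  induction k; intros C X rho; simpl; [tauto|].
  split; split.
  - intros [y H]. apply (IHk C X (scons y rho)) in H. destruct H; split; eauto.
  - intros [HC [y H]]. exists y. apply (IHk C X (scons y rho)). auto.
  - intros H. split; [destruct (proj1 (proj1 (IHk C X (scons 0 rho))) (H 0)); auto|].
    intros y. apply (IHk C X (scons y rho)). auto.
  - intros [HC H] y. apply (IHk C X (scons y rho)). auto.
Qed.

Lemma map_push_1 : forall ws rho, map (push ws rho) (seq 0 (S (length ws))) = ws ++ [rho 0].
Proof. intros. rewrite seq_S, map_app, push_map. simpl. rewrite push_n. reflexivity. Qed.

Lemma map_push_2 : forall ws rho, map (push ws rho) (seq 0 (S (S (length ws)))) = ws ++ [rho 0; rho 1].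
Proof.
  intros. rewrite seq_S, map_app, map_push_1. simpl. rewrite push_Sn, <- app_assoc. reflexivity.
Qed.

Lemma push_SSn : forall ws rho, push ws rho (S (S (length ws))) = rho 2.
Proof. intros. replace (S (S (length ws))) with (length ws + 2) by lia. apply push_ge. Qed.

Section Cantor2.
Variable m : nat.

Definition EC (x y : nat -> bool) : Prop := QS (S (S m)) (BaseC m (scons x (scons y no_reals))) no_nums.

Lemma EC_sem : forall x y, EC x y <->
  (x 0 = y 0 /\ forall i, x i = y i) \/
  (x 0 <> y 0 /\ exists k, (forall i, Pk (scons x (scons y no_reals)) k i) /\ Dnat (S (S m)) k).
Proof.
  intros x y. unfold EC. cbn [QS QP]. set (xi := scons x (scons y no_reals)).
  destruct (bool_dec (x 0) (y 0)) as [E0|E0].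
  - assert (Hz : forall u z2, QS m (BaseC m xi) (scons z2 (scons u no_nums)) <-> x z2 = y z2).
    { intros u z2.
      assert (Ht : forall ws, length ws = m -> (BaseC m xi (push ws (scons z2 (scons u no_nums))) <->
                     (fun _ => x z2 = y z2) (push ws (scons z2 (scons u no_nums))))).
      { intros ws Hl. unfold BaseC. rewrite <- Hl, push_n. simpl. split; [|tauto].
        intros [[_ H]|[H _]]; [exact H|contradiction]. }
      rewrite (proj1 (Q_transport m _ _ _ _ Ht)). apply Q_const. }
    setoid_rewrite Hz. split.
    + intros [u H]. left; split; auto.
    + intros [[_ H]|[H _]]; [exists 0; auto|contradiction].
  - assert (Hz : forall u z2, QS m (BaseC m xi) (scons z2 (scons u no_nums)) <->
               Pk xi (fst (uncp u)) z2 /\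
               QS m (Dbase (S (S m))) (scons z2 (scons (snd (uncp u)) (scons (fst (uncp u)) no_nums)))).
    { intros u z2. destruct (uncp u) as [k0 v0] eqn:Eu. simpl fst; simpl snd.
      pose proof (uncp_spec _ _ _ Eu) as Hu. pose proof (Pg_le _ _ _ Hu).
      assert (Ht : forall ws, length ws = m -> (BaseC m xi (push ws (scons z2 (scons u no_nums))) <->
                     (fun r => Pk xi k0 z2 /\ Dbase (S (S m)) r) (push ws (scons z2 (scons v0 (scons k0 no_nums)))))).
      { intros ws Hl. unfold BaseC, Dbase. rewrite <- Hl, push_n, push_Sn.
        rewrite push_SSn, map_push_1, map_push_2. simpl. split.
        - intros [[Hc _]|[_ (k & _ & _ & v & _ & Hk & HP & HD)]]; [contradiction|].
          rewrite Hu in Hk. apply P_inj in Hk as [<- <-]. rewrite <- !app_assoc in *. simpl in *. auto.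
        - intros [HP HD]. right. split; auto. exists k0. split; [lia|]. split; [exists v0; split; [lia|auto]|].
          exists v0. split; [lia|]. rewrite <- !app_assoc in *. simpl in *. auto. }
      rewrite (proj1 (Q_transport m _ _ _ _ Ht)). apply Q_and_const. }
    setoid_rewrite Hz. split.
    + intros [u H]. right. split; auto. exists (fst (uncp u)). split.
      * intros i. apply (H i).
      * unfold Dnat. cbn [QS QP]. exists (snd (uncp u)). intros z2. apply (H z2).
    + intros [[H _]|[_ (k & HP & HD)]]; [contradiction|].
      unfold Dnat in HD. cbn [QS QP] in HD. destruct HD as [v HD].
      exists (cpv k v). rewrite uncp_cpv. simpl. intros z2. split; auto.
Qed.

End Cantor2.

Definition tsh (d : nat) (t : term) : term := tsubst (fun i => if i <? d then tvar i else tvar (S i)) t.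

Lemma teval_tsh : forall d rho rho' t,
  (forall i, i < d -> rho' i = rho i) -> (forall i, d <= i -> rho' (S i) = rho i) ->
  teval rho' (tsh d t) = teval rho t.
Proof.
  intros d rho rho' t H1 H2. unfold tsh. rewrite teval_subst. apply teval_ext. intros i.
  destruct (i <? d) eqn:E; simpl.
  - apply Nat.ltb_lt in E. auto.
  - apply Nat.ltb_ge in E. auto.
Qed.

Fixpoint rtrans (d : nat) (p : formula) : formula :=
  match p with
  | feq u v => feq (tsh d u) (tsh d v)
  | flt u v => flt (tsh d u) (tsh d v)
  | fmem 0 u => feq (tsh d u) (tsucc (tvar d))
  | fmem 1 u => forr (feq (tsh d u) tzero) (feq (tsh d u) (tsucc (tvar d)))
  | fmem _ u => flt tzero tzero
  | fnot q => fnot (rtrans d q)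
  | fand q r => fand (rtrans d q) (rtrans d r)
  | forr q r => forr (rtrans d q) (rtrans d r)
  | fbex u q => fbex (tsh d u) (rtrans (S d) q)
  | fball u q => fball (tsh d u) (rtrans (S d) q)
  | fex q => fex (rtrans (S d) q)
  | fall q => fall (rtrans (S d) q)
  end.

Definition xk (k : nat) : nat -> bool := fun i => match i with 0 => false | S j => j =? k end.
Definition xk' (k : nat) : nat -> bool := fun i => match i with 0 => true | S j => j =? k end.

Lemma rtrans_sat : forall p d rho rho' k,
  (forall i, i < d -> rho' i = rho i) -> rho' d = k -> (forall i, d <= i -> rho' (S i) = rho i) ->
  (sat (scons (xk k) (scons (xk' k) no_reals)) rho p <-> sat no_reals rho' (rtrans d p)).
Proof.
  induction p; intros d rho rho' k H1 H2 H3; simpl; rewrite ?(teval_tsh d rho rho' _ H1 H3); try tauto.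
  - destruct n as [|[|n]]; simpl; rewrite ?(teval_tsh d rho rho' _ H1 H3), ?H2.
    + destruct (teval rho t) as [|j]; simpl; [split; [discriminate|lia]|].
      rewrite Nat.eqb_eq. lia.
    + destruct (teval rho t) as [|j]; simpl; [tauto|]. rewrite Nat.eqb_eq. lia.
    + unfold no_reals. split; [discriminate|lia].
  - rewrite (IHp d rho rho' k); tauto.
  - rewrite (IHp1 d rho rho' k), (IHp2 d rho rho' k); tauto.
  - rewrite (IHp1 d rho rho' k), (IHp2 d rho rho' k); tauto.
  - assert (Hb : forall a, sat (scons (xk k) (scons (xk' k) no_reals)) (scons a rho) p <->
                           sat no_reals (scons a rho') (rtrans (S d) p)).
    { intros a. apply IHp.
      - intros [|i] Hi; simpl; auto. apply H1; lia.
      - simpl; auto.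
      - intros [|i] Hi; simpl; [lia|]. apply H3; lia. }
    setoid_rewrite Hb. tauto.
  - assert (Hb : forall a, sat (scons (xk k) (scons (xk' k) no_reals)) (scons a rho) p <->
                           sat no_reals (scons a rho') (rtrans (S d) p)).
    { intros a. apply IHp.
      - intros [|i] Hi; simpl; auto. apply H1; lia.
      - simpl; auto.
      - intros [|i] Hi; simpl; [lia|]. apply H3; lia. }
    setoid_rewrite Hb. tauto.
  - assert (Hb : forall a, sat (scons (xk k) (scons (xk' k) no_reals)) (scons a rho) p <->
                           sat no_reals (scons a rho') (rtrans (S d) p)).
    { intros a. apply IHp.
      - intros [|i] Hi; simpl; auto. apply H1; lia.
      - simpl; auto.
      - intros [|i] Hi; simpl; [lia|]. apply H3; lia. }
    setoid_rewrite Hb. tauto.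
  - assert (Hb : forall a, sat (scons (xk k) (scons (xk' k) no_reals)) (scons a rho) p <->
                           sat no_reals (scons a rho') (rtrans (S d) p)).
    { intros a. apply IHp.
      - intros [|i] Hi; simpl; auto. apply H1; lia.
      - simpl; auto.
      - intros [|i] Hi; simpl; [lia|]. apply H3; lia. }
    setoid_rewrite Hb. tauto.
Qed.

Lemma bounded_rtrans : forall p d, bounded p -> bounded (rtrans d p).
Proof. induction p; intros d Hb; simpl in *; try destruct n as [|[|n]]; simpl; intuition. Qed.

Lemma rtrans_SP : forall n, (forall p d, is_Sigma n p -> is_Sigma n (rtrans d p)) /\
                           (forall p d, is_Pi n p -> is_Pi n (rtrans d p)).
Proof.
  induction n; split; intros p d H; simpl in *.
  - apply bounded_rtrans; auto.
  - apply bounded_rtrans; auto.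
  - destruct p; try contradiction; simpl. apply IHn; auto.
  - destruct p; try contradiction; simpl. apply IHn; auto.
Qed.

Lemma bool_iff : forall a b : bool, (a = true <-> b = true) -> a = b.
Proof. intros [|] [|]; intuition. Qed.

Section CantorFinal.
Variable m : nat.

Lemma EC_equiv : equivalence (nat -> bool) (EC m).
Proof.
  constructor.
  - intros x. apply EC_sem. left; auto.
  - intros x y z H1 H2. apply EC_sem in H1, H2. apply EC_sem. unfold Pk in *; simpl in *.
    destruct H1 as [[E1 F1]|[E1 (k & P1 & D1)]]; destruct H2 as [[E2 F2]|[E2 (k' & P2 & D2)]].
    + left. split; [congruence|]. intros i; rewrite F1; auto.
    + right. split; [congruence|]. exists k'. split; auto. intros i. rewrite F1. auto.
    + right. split; [congruence|]. exists k. split; auto. intros i. rewrite <- F2. auto.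
    + left. split; [destruct (x 0), (y 0), (z 0); congruence|].
      intros [|i]; [destruct (x 0), (y 0), (z 0); congruence|].
      apply bool_iff. destruct (P1 i) as [A1 B1]. destruct (P2 i) as [A2 B2].
      tauto.
  - intros x y H. apply EC_sem in H. apply EC_sem. unfold Pk in *; simpl in *.
    destruct H as [[E1 F1]|[E1 (k & P1 & D1)]].
    + left; split; auto.
    + right; split; auto. exists k; split; auto. intros i; destruct (P1 i); tauto.
Qed.

Lemma EC_Sigma : Sigma0_cantor (S (S m)) (EC m).
Proof.
  destruct (proj1 (prefix_lemma (BaseC m) (BaseC_D1 m) (S (S m)) ltac:(lia))) as (p & Hp & Hs).
  exists p. split; auto. intros x y. unfold EC. apply Hs.
Qed.

Lemma EC_xk : forall k, EC m (xk k) (xk' k) <-> Dnat (S (S m)) k.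
Proof.
  intros k. rewrite EC_sem. unfold Pk; simpl. split.
  - intros [[E _]|[_ (k' & HP & HD)]]; [discriminate|].
    destruct (HP k) as [A _]. assert (k = k') by (apply A; apply Nat.eqb_refl). subst; auto.
  - intros HD. right. split; [discriminate|]. exists k. split; auto. intros i. rewrite Nat.eqb_eq. tauto.
Qed.

Lemma EC_not_graphable : ~ graphable (Pi0_cantor (S (S m))) (EC m).
Proof.
  intros (G & (p & Hp & HG) & Hsym & Hirr & HE).
  assert (Key : forall k, Dnat (S (S m)) k <-> G (xk k) (xk' k)).
  { intros k. split.
    - intros Hd. apply EC_xk in Hd. apply HE in Hd. apply clos_rt_rt1n in Hd.
      remember (xk' k) as b eqn:Eb.
      destruct Hd as [|c z Hac Hc].
      + exfalso. pose proof (f_equal (fun f => f 0) Eb) as F. simpl in F. discriminate.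
      + assert (Ec : EC m (xk k) c) by (apply HE; apply rt_step; auto).
        apply EC_sem in Ec. unfold Pk in Ec; simpl in Ec.
        destruct Ec as [[_ F]|[E0 (k' & HP & _)]].
        * exfalso. assert (c = xk k) by (apply functional_extensionality; intros; auto). subst c.
          eapply Hirr; eauto.
        * destruct (HP k) as [A _]. assert (k = k') by (apply A; apply Nat.eqb_refl). subst k'.
          assert (c = xk' k). { apply functional_extensionality. intros [|i].
            - simpl. destruct (c 0); auto.
            - simpl. apply bool_iff. destruct (HP i). rewrite Nat.eqb_eq. tauto. }
          rewrite Eb. subst c. auto.
    - intros Hg. apply EC_xk. apply HE. apply rt_step; auto. }
  set (q := rtrans 0 p).
  assert (Hq : is_Pi (S (S m)) q) by (apply rtrans_SP; auto).
  assert (Hd : forall k, Dnat (S (S m)) k <-> sat no_reals (scons k no_nums) q).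
  { intros k. rewrite Key, HG. apply rtrans_sat; [intros; lia|reflexivity|intros; reflexivity]. }
  destruct (proj1 (Pi_shape (S (S m))) q Hq) as (t & Ht & Eq).
  pose proof (Dnat_diag (S (S m)) ltac:(lia) t Ht) as Hdiag. rewrite Hd, Eq in Hdiag. tauto.
Qed.

End CantorFinal.

Theorem proposition3p3 :
  (forall n : nat, 2 <= n ->
     exists E : (nat -> bool) -> (nat -> bool) -> Prop,
       equivalence (nat -> bool) E /\ Sigma0_cantor n E /\
       ~ graphable (Pi0_cantor n) E) /\
  (forall n : nat, 1 <= n ->
     exists E : nat -> nat -> Prop,
       equivalence nat E /\ Sigma0_nat n E /\
       ~ graphable (Pi0_nat n) E).
Proof.
  split.
  - intros n Hn. destruct n as [|[|m]]; try lia.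
    exists (EC m). split; [apply EC_equiv|split; [apply EC_Sigma|apply EC_not_graphable]].
  - intros n Hn. exists (Enat n).
    split; [apply Enat_equiv; auto|split; [apply Enat_Sigma; auto|apply Enat_not_graphable; auto]].
Qed.
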